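(* Let $\epsilon$ be a positive parameter. Then there is a deterministic algorithm that, given query access to a list $a_1\le a_2\le\cdots\le a_n$ of nonnegative real numbers sorted in nondecreasing order (and given $n$ and $\epsilon$), outputs a $(1+\epsilon)$-approximation for the sum $\sum_{i=1}^n a_i$ in time $$O\!\left(\frac{1}{\epsilon}\min\!\left(\log n,\ \log\frac{x_{max}}{x_{min}}\right)\cdot\left(\log\frac{1}{\epsilon}+\log\log n\right)\right),$$ where $x_{max}$ and $x_{min}$ are the largest and the least positive elements of the input list, respectively.
   Context: A real number $s$ is a $(1+\epsilon)$-approximation for the sum of $a_1,\dots,a_n$ if $\frac{1}{1+\epsilon}\sum_{i=1}^n a_i\le s\le (1+\epsilon)\sum_{i=1}^n a_i$. The algorithm accesses the input list by reading (querying) individual entries $a_i$ at unit cost; running time counts such queries and arithmetic operations. *)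

(* Defs.v *)
From Stdlib Require Import Reals List ZArith.
Open Scope R_scope.

(** Registers hold reals and are indexed by natural numbers.  Every executed
    instruction (a query, an arithmetic operation, a comparison/jump, or the
    final halt) costs one unit of time. *)
Inductive instr : Type :=
| IConst0 (d : nat)
| IConst1 (d : nat)
| IAdd (d x y : nat)
| ISub (d x y : nat)
| IMul (d x y : nat)
| IDiv (d x y : nat)               (* r_d := r_x / r_y  (Stdlib: /0 = 0) *)
| IFloor (d x : nat)
| IQuery (d x : nat)
| IJlt (x y : nat) (t : nat)
| IJmp (t : nat)
| IHalt (x : nat).

Definition program := list instr.

Definition regs := nat -> R.

Definition upd (r : regs) (d : nat) (v : R) : regs :=
  fun k => if Nat.eqb k d then v else r k.

Definition floorR (x : R) : R := IZR (Int_part x).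

(** [run p a fuel pc r] executes program [p] with input oracle [a]
    (the list is [a 1, ..., a n]) from program counter [pc] and register
    file [r], executing at most [fuel] instructions; it returns [Some s]
    iff the machine executes [IHalt x] (with [r_x = s]) within that many
    instructions (the halt counted). *)
Fixpoint run (p : program) (a : nat -> R) (fuel : nat) (pc : nat) (r : regs)
  : option R :=
  match fuel with
  | O => None
  | S f =>
    match nth_error p pc with
    | None => None
    | Some i =>
      match i with
      | IConst0 d => run p a f (S pc) (upd r d 0)
      | IConst1 d => run p a f (S pc) (upd r d 1)
      | IAdd d x y => run p a f (S pc) (upd r d (r x + r y))
      | ISub d x y => run p a f (S pc) (upd r d (r x - r y))
      | IMul d x y => run p a f (S pc) (upd r d (r x * r y))
      | IDiv d x y => run p a f (S pc) (upd r d (r x / r y))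
      | IFloor d x => run p a f (S pc) (upd r d (floorR (r x)))
      | IQuery d x => run p a f (S pc) (upd r d (a (Z.to_nat (Int_part (r x)))))
      | IJlt x y t => if Rlt_dec (r x) (r y) then run p a f t r
                      else run p a f (S pc) r
      | IJmp t => run p a f t r
      | IHalt x => Some (r x)
      end
    end
  end.

Definition init_regs (n : nat) (eps : R) : regs :=
  fun k => match k with 0%nat => INR n | 1%nat => eps | _ => 0 end.

Definition sorted_nonneg (a : nat -> R) (n : nat) : Prop :=
  (forall i, (1 <= i <= n)%nat -> 0 <= a i) /\
  (forall i j, (1 <= i)%nat -> (i <= j)%nat -> (j <= n)%nat -> a i <= a j).

Fixpoint sumR (a : nat -> R) (k : nat) : R :=
  match k with O => 0 | S k' => sumR a k' + a (S k') end.

Fixpoint maxR (a : nat -> R) (k : nat) : R :=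
  match k with O => 0 | S k' => Rmax (maxR a k') (a (S k')) end.

Fixpoint minpos (a : nat -> R) (k : nat) : option R :=
  match k with
  | O => None
  | S k' =>
    let m := minpos a k' in
    if Rlt_dec 0 (a (S k'))
    then Some (match m with None => a (S k') | Some v => Rmin v (a (S k')) end)
    else m
  end.

Definition log_ratio (a : nat -> R) (n : nat) : R :=
  match minpos a n with
  | None => 0
  | Some xmin => ln (maxR a n / xmin)
  end.

Definition approx (eps S s : R) : Prop :=
  / (1 + eps) * S <= s <= (1 + eps) * S.

(** The time bound inside the O( . ), with each logarithmic factor
    floored at a constant (1 + ...), the standard reading of O-bounds
    with logarithms:
    (1/eps) * (1 + min(log n, log(xmax/xmin))) * (1 + log(1/eps) + log(1 + log n)). *)
Definition time_bound (eps : R) (n : nat) (lr : R) : R :=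
  / eps * (1 + Rmin (ln (INR n)) lr) * (1 + ln (/ eps) + ln (1 + ln (INR n))).

(* Main.v *)
Require Import Defs.
From Stdlib Require Import Reals List ZArith Lia Lra Psatz.
Open Scope R_scope.
Import ListNotations.


Lemma Int_part_spec (x : R) (z : Z) : IZR z <= x < IZR z + 1 -> Int_part x = z.
Proof.
  intros [H1 H2]. unfold Int_part.
  assert (up x = (z + 1)%Z).
  { symmetry. apply tech_up; rewrite plus_IZR; simpl; lra. }
  rewrite H. ring.
Qed.

Lemma floorR_INR_plus (k : nat) (y : R) : 0 <= y < 1 -> floorR (INR k + y) = INR k.
Proof.
  intros Hy. unfold floorR. rewrite (Int_part_spec _ (Z.of_nat k)).
  - now rewrite <- INR_IZR_INZ.
  - rewrite <- INR_IZR_INZ; lra.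
Qed.

Lemma floorR_INR (k : nat) : floorR (INR k) = INR k.
Proof. rewrite <- (Rplus_0_r (INR k)) at 1. apply floorR_INR_plus; lra. Qed.

Lemma idx_INR (k : nat) : Z.to_nat (Int_part (INR k)) = k.
Proof.
  rewrite (Int_part_spec _ (Z.of_nat k)). apply Nat2Z.id.
  rewrite <- INR_IZR_INZ; lra.
Qed.

Lemma floorR_half (p : nat) : floorR (INR p / 2) = INR (p / 2).
Proof.
  pose proof (Nat.div_mod p 2 ltac:(lia)) as Hd.
  pose proof (Nat.mod_upper_bound p 2 ltac:(lia)) as Hm.
  assert (INR p = 2 * INR (p/2) + INR (p mod 2)) as E.
  { rewrite Hd at 1. rewrite plus_INR, mult_INR. simpl. lra. }
  assert (INR (p mod 2) = 0 \/ INR (p mod 2) = 1) as E2.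
  { destruct (p mod 2) as [|[|q]]; [left; reflexivity | right; reflexivity | lia]. }
  rewrite E. replace ((2 * INR (p / 2) + INR (p mod 2)) / 2) with
     (INR (p/2) + INR (p mod 2) / 2) by (field).
  apply floorR_INR_plus. destruct E2 as [E2|E2]; rewrite E2; lra.
Qed.

Lemma floorR_nonneg (x : R) : 0 <= x -> exists k : nat,
  floorR x = INR k /\ INR k <= x < INR k + 1.
Proof.
  intros Hx. unfold floorR. destruct (base_Int_part x) as [H1 H2].
  assert (0 <= Int_part x)%Z.
  { apply le_IZR. assert (IZR (Int_part x) > -1) by lra.
    destruct (Z_lt_le_dec (Int_part x) 0) as [Hl|Hl]; [|now apply IZR_le].
    assert (Int_part x <= -1)%Z by lia. apply IZR_le in H0. lra. }
  exists (Z.to_nat (Int_part x)). rewrite INR_IZR_INZ, Z2Nat.id by lia. split; [reflexivity|lra].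
Qed.


Lemma sorted_le a n i j : sorted_nonneg a n -> (1 <= i)%nat -> (i <= j)%nat -> (j <= n)%nat -> a i <= a j.
Proof. intros [_ H] ? ? ?. apply H; lia. Qed.
Lemma sorted_nn a n i : sorted_nonneg a n -> (1 <= i <= n)%nat -> 0 <= a i.
Proof. intros [H _] ?. apply H; lia. Qed.

Lemma sum_block a n j L : sorted_nonneg a n -> (1 <= j)%nat -> (j - 1 + L <= n)%nat ->
  INR L * a j <= sumR a (j - 1 + L) - sumR a (j - 1) <= INR L * a (j - 1 + L)%nat.
Proof.
  intros Hs Hj. induction L as [|L IH]; intros HL.
  - simpl. rewrite Nat.add_0_r. lra.
  - replace (j - 1 + S L)%nat with (S (j - 1 + L)) by lia. simpl sumR.
    rewrite S_INR.
    destruct L as [|L].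
    + simpl. rewrite Nat.add_0_r. replace (S (j-1)) with j by lia. lra.
    + specialize (IH ltac:(lia)).
      assert (a j <= a (S (j - 1 + S L))) by (apply (sorted_le a n); [assumption|lia..]).
      assert (a (j - 1 + S L)%nat <= a (S (j - 1 + S L))) by (apply (sorted_le a n); [assumption|lia..]).
      rewrite !Rmult_plus_distr_r, !Rmult_1_l. destruct IH. split; [lra|]. assert (INR (S L) * a (j - 1 + S L)%nat <= INR (S L) * a (S (j - 1 + S L))) by (apply Rmult_le_compat_l; [apply pos_INR|lra]). lra.
Qed.

Definition Tt a n i := sumR a n - sumR a i.
Definition Uu a n i := Tt a n i - INR (n - i) * a (S i).
Definition Inv a n (d : R) i O := O <= Tt a n i /\ Tt a n i <= (1 + d) * O + d * Uu a n i.

Definition vblock a n (d : R) j i :=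
  a i <= (1 + d) * a j \/ INR (i - j + 1) <= d * INR (n - i).

Lemma block_step a n d j i O : 0 <= d -> sorted_nonneg a n -> (1 <= j)%nat -> (j <= i)%nat ->
  (i <= n)%nat -> vblock a n d j i -> Inv a n d i O ->
  Inv a n d (j - 1) (O + INR (i - j + 1) * a j).
Proof.
  intros Hd Hs Hj Hji Hin Hv [I1 I2].
  set (L := (i - j + 1)%nat).
  pose proof (sum_block a n j L Hs Hj ltac:(unfold L; lia)) as [S1 S2].
  replace (j - 1 + L)%nat with i in S1, S2 by (unfold L; lia).
  set (Sb := sumR a i - sumR a (j - 1)) in *.
  assert (ET : Tt a n (j - 1) = Tt a n i + Sb) by (unfold Tt, Sb; ring).
  assert (EN : INR (n - (j - 1)) = INR (n - i) + INR L) by (rewrite <- plus_INR; f_equal; unfold L; lia).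
  assert (EA : S (j - 1) = j) by lia.
  unfold Inv, Uu in *. rewrite ET, EN, EA.
  set (N := INR (n - i)) in *. set (Lr := INR L) in *.
  assert (HN : 0 <= N) by apply pos_INR. assert (HL : 0 <= Lr) by apply pos_INR.
  assert (Haj : 0 <= a j) by (apply (sorted_nn a n); [assumption|lia]).
  assert (Hij : a j <= a i) by (apply (sorted_le a n); [assumption|lia..]).
  assert (Key : N * a i <= N * a (S i)).
  { destruct (Nat.eq_dec i n) as [->|Hne].
    - unfold N. rewrite Nat.sub_diag. simpl. lra.
    - apply Rmult_le_compat_l; [lra|]. apply (sorted_le a n); [assumption|lia..]. }
  assert (N * a j <= N * a i) by (apply Rmult_le_compat_l; lra).
  assert (0 <= Lr * a j) by (apply Rmult_le_pos; lra).
  split; [lra|].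
  assert (Goal1 : Sb <= Lr * a j + d * (N * a (S i) - N * a j) + d * Sb).
  { assert (0 <= d * (N * a (S i) - N * a j)) by (apply Rmult_le_pos; lra).
    assert (0 <= d * Sb) by (apply Rmult_le_pos; lra).
    destruct Hv as [Hv|Hv].
    - assert (Lr * a i <= Lr * ((1 + d) * a j)) by (apply Rmult_le_compat_l; lra).
      assert (d * (Lr * a j) <= d * Sb) by (apply Rmult_le_compat_l; lra).
      assert (Lr * ((1 + d) * a j) = Lr * a j + d * (Lr * a j)) by ring. lra.
    - fold L Lr in Hv.
      assert (Lr * (a i - a j) <= (d * N) * (a i - a j)) by (apply Rmult_le_compat_r; [lra|fold N in Hv; lra]).
      assert (d * (N * a i) <= d * (N * a (S i))) by (apply Rmult_le_compat_l; lra).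
      assert (Lr * (a i - a j) = Lr * a i - Lr * a j) by ring.
      assert (d * N * (a i - a j) = d * (N * a i) - d * (N * a j)) by ring.
      assert (d * (N * a (S i) - N * a j) = d * (N * a (S i)) - d * (N * a j)) by ring.
      lra. }
  assert (E1 : (1 + d) * (O + Lr * a j) = (1 + d) * O + Lr * a j + d * (Lr * a j)) by ring.
  assert (E2 : d * (Tt a n i + Sb - (N + Lr) * a j) = d * Tt a n i + d * Sb - d * (N * a j) - d * (Lr * a j)) by ring.
  assert (E3 : d * (Tt a n i - N * a (S i)) = d * Tt a n i - d * (N * a (S i))) by ring.
  assert (E4 : d * (N * a (S i) - N * a j) = d * (N * a (S i)) - d * (N * a j)) by ring.
  rewrite E1, E2. rewrite E3 in I2. lra.
Qed.

Lemma Inv_init a n d : Inv a n d n 0.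
Proof. unfold Inv, Uu, Tt. rewrite Nat.sub_diag. simpl. split; [lra|]. 
  assert (0 <= d * (0 - 0 * a (S n)) \/ d * (sumR a n - sumR a n - 0 * a (S n)) = 0) by (right; ring). lra. Qed.

Lemma Inv_final a n eps O : (1 <= n)%nat -> 0 < eps < 1 -> sorted_nonneg a n ->
  Inv a n (eps / 3) 0 O -> approx eps (sumR a n) O.
Proof.
  intros Hn He Hs [I1 I2]. unfold Uu in I2.
  assert (ET : Tt a n 0 = sumR a n) by (unfold Tt; simpl; ring).
  rewrite ET in I1, I2. rewrite Nat.sub_0_r in I2.
  set (S := sumR a n) in *.
  assert (0 <= a 1%nat) by (apply (sorted_nn a n); [assumption|lia]).
  assert (0 <= INR n * a 1%nat) by (apply Rmult_le_pos; [apply pos_INR|lra]).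
  assert (eps / 3 * (S - INR n * a 1%nat) <= eps / 3 * S).
  { apply Rmult_le_compat_l; lra. }
  assert (HS : S <= (1 + eps/3) * O + eps/3 * S) by lra.
  assert (HS2 : S * (1 - eps/3) <= (1 + eps/3) * O) by lra.
  assert (0 <= S).
  { pose proof (sum_block a n 1 n Hs ltac:(lia) ltac:(lia)) as [Q _].
    replace (1 - 1 + n)%nat with n in Q by lia. simpl sumR in Q. unfold S. lra. }
  assert (0 <= S * (1 - eps/3)) by (apply Rmult_le_pos; lra).
  assert (0 <= O).
  { destruct (Rle_lt_dec 0 O) as [h|h]; [exact h|].
    assert ((1 + eps/3) * O < 0) by (apply Rmult_pos_neg; lra). lra. }
  unfold approx. split.
  - apply (Rmult_le_reg_l (1 + eps)); [lra|]. rewrite <- Rmult_assoc, Rinv_r by lra.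
    rewrite Rmult_1_l.
    assert (H5 : (1 + eps) * (S * (1 - eps/3)) <= (1 + eps) * ((1 + eps/3) * O)) by (apply Rmult_le_compat_l; lra).
    assert (H6 : 0 <= S * (eps / 3 * (1 - eps))) by (apply Rmult_le_pos; [lra| apply Rmult_le_pos; lra]).
    assert (H7 : (1 + eps/3) * S <= (1 + eps/3) * ((1 + eps) * O)) by nra.
    apply (Rmult_le_reg_l (1 + eps/3)); lra.
  - assert (0 <= eps * S) by (apply Rmult_le_pos; lra). nra.
Qed.


Lemma ln_le' x y : 0 < x -> x <= y -> ln x <= ln y.
Proof. intros. destruct H0 as [H0|H0]; [left; apply ln_increasing; lra| subst; lra]. Qed.

Lemma ln_xm1 x : 0 < x -> ln x <= x - 1.
Proof. intros. pose proof (exp_ineq1_le (ln x)). rewrite exp_ln in H0 by lra. lra. Qed.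

Lemma ln_1px x : 0 <= x -> x / (1 + x) <= ln (1 + x).
Proof.
  intros. pose proof (ln_xm1 (/ (1 + x)) ltac:(apply Rinv_0_lt_compat; lra)).
  rewrite ln_Rinv in H0 by lra.
  assert (/ (1 + x) - 1 = - (x / (1 + x))) by (field; lra). lra.
Qed.

Lemma ln_1px_half x : 0 <= x <= 1 -> x / 2 <= ln (1 + x).
Proof.
  intros. pose proof (ln_1px x ltac:(lra)).
  assert (x / 2 <= x / (1 + x)).
  { unfold Rdiv. apply Rmult_le_compat_l; [lra|]. apply Rinv_le_contravar; lra. }
  lra.
Qed.

Lemma ln_nonneg x : 1 <= x -> 0 <= ln x.
Proof. intros. rewrite <- ln_1. apply ln_le'; lra. Qed.

Lemma ln2_pos : / 2 < ln 2. Proof. exact ln_lt_2. Qed.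

Definition Pot1 (d : R) n k i := (1 + d / 4) ^ k <= 1 + d * INR (n - i).
Definition Pot2 a n (d : R) k i :=
  ((1 <= i)%nat -> (1 + d) ^ k * a i <= a n) /\
  ((1 <= k)%nat -> exists j, (1 <= j <= n)%nat /\ 0 < a j /\ (1 + d) ^ (k - 1) * a j <= a n).

Lemma Pot_init a n d : Pot1 d n 0 n /\ Pot2 a n d 0 n.
Proof.
  unfold Pot1, Pot2. rewrite Nat.sub_diag. simpl. split; [lra|]. split; [lra| lia].
Qed.

Lemma Pot_step a n d k i i' (B : nat) : 0 < d <= 1 -> sorted_nonneg a n ->
  (1 <= i <= n)%nat -> 0 < a i -> (i' < i)%nat ->
  ((1 <= i')%nat -> a i' * (1 + d) < a i) ->
  (n - i + B <= n - i')%nat ->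
  1 <= INR B -> (1 <= d * INR (n - i) -> d * INR (n - i) / 2 <= INR B) ->
  Pot1 d n k i -> Pot2 a n d k i -> Pot1 d n (S k) i' /\ Pot2 a n d (S k) i'.
Proof.
  intros Hd Hs Hi Hai Hi' Hdrop HB HB1 HB2 P1 [P2 P3]. split.
  - unfold Pot1 in *. simpl pow.
    set (D := INR (n - i)) in *.
    assert (INR (n - i) + INR B <= INR (n - i')) by (rewrite <- plus_INR; apply le_INR; lia).
    fold D in H.
    assert (0 <= D) by apply pos_INR.
    assert (Hp : 0 <= (1 + d / 4) ^ k) by (apply pow_le; lra).
    assert ((1 + d / 4) * (1 + d / 4) ^ k <= (1 + d / 4) * (1 + d * D)) by (apply Rmult_le_compat_l; lra).
    assert ((1 + d/4) * (1 + d * D) <= 1 + d * (D + INR B)).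
    { destruct (Rlt_le_dec (d * D) 1).
      - assert (d * INR B >= d) by nra. nra.
      - specialize (HB2 r). nra. }
    assert (d * (D + INR B) <= d * INR (n - i')) by (apply Rmult_le_compat_l; lra). lra.
  - split.
    + intros Hi1. simpl pow.
      assert (a i' * (1 + d) < a i) by auto.
      assert (0 <= (1 + d) ^ k) by (apply pow_le; lra).
      specialize (P2 ltac:(lia)).
      assert ((1 + d) ^ k * (a i' * (1 + d)) <= (1 + d) ^ k * a i) by (apply Rmult_le_compat_l; lra).
      nra.
    + intros _. exists i. split; [lia|]. split; [lra|]. simpl. rewrite Nat.sub_0_r. apply P2. lia.
Qed.

Lemma maxR_sorted a n k : sorted_nonneg a n -> (1 <= k <= n)%nat -> maxR a k = a k.
Proof.
  intros Hs. induction k as [|k IH]; intros Hk; [lia|].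
  simpl. destruct k as [|k].
  - simpl. apply Rmax_right. apply (sorted_nn a n); [assumption|lia].
  - rewrite IH by lia. apply Rmax_right. apply (sorted_le a n); [assumption|lia..].
Qed.

Lemma minpos_some a k xm : minpos a k = Some xm -> 0 < xm /\ exists j, (1 <= j <= k)%nat /\ xm = a j.
Proof.
  revert xm. induction k as [|k IH]; intros xm H; simpl in H; [discriminate|].
  destruct (Rlt_dec 0 (a (S k))).
  - destruct (minpos a k) as [v|] eqn:E; injection H as <-.
    + destruct (IH v eq_refl) as [Hv [j [Hj ->]]].
      unfold Rmin. destruct (Rle_dec (a j) (a (S k))).
      * split; [lra|]. exists j. split; [lia|reflexivity].
      * split; [lra|]. exists (S k). split; [lia|reflexivity].
    + split; [lra|]. exists (S k). split; [lia|reflexivity].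
  - destruct (IH xm H) as [Hv [j [Hj ->]]]. split; [lra|]. exists j. split; [lia|reflexivity].
Qed.

Lemma minpos_none a k j : (1 <= j <= k)%nat -> 0 < a j -> minpos a k <> None.
Proof.
  induction k; intros; [lia|]. simpl.
  destruct (Rlt_dec 0 (a (S k))); [destruct (minpos a k); discriminate|].
  destruct (Nat.eq_dec j (S k)) as [->|]; [contradiction|]. apply IHk; [lia|lra].
Qed.

Lemma minpos_le a k xm : minpos a k = Some xm -> forall j, (1 <= j <= k)%nat -> 0 < a j -> xm <= a j.
Proof.
  revert xm. induction k as [|k IH]; intros xm H j Hj Haj; simpl in H; [discriminate|].
  destruct (Rlt_dec 0 (a (S k))).
  - destruct (minpos a k) as [v|] eqn:E; injection H as <-.
    + destruct (Nat.eq_dec j (S k)) as [->|Hne].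
      * apply Rmin_r.
      * eapply Rle_trans; [apply Rmin_l|]. apply (IH v eq_refl); [lia|lra].
    + destruct (Nat.eq_dec j (S k)) as [->|Hne]; [lra|].
      exfalso. apply (minpos_none a k j); [lia|lra|assumption].
  - destruct (Nat.eq_dec j (S k)) as [->|Hne]; [contradiction|].
    apply (IH xm H); [lia|lra].
Qed.



Definition K1 n (d : R) := ln (1 + INR n) / ln (1 + d / 4).
Definition K2 a n (d : R) := match minpos a n with None => 0 | Some xm => 1 + ln (a n / xm) / ln (1 + d) end.
Definition Kb a n d := Rmin (K1 n d) (K2 a n d).
Definition Jmax n := 2 + ln (1 + ln (INR n)) / ln 2.
Definition bmax (d : R) := 2 + ln (/ d) / ln 2.
Definition PB n d := 100 * (1 + Jmax n + bmax d).

Lemma div_le_by (x y z : R) : 0 < z -> x * z <= y -> x <= y / z.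
Proof. intros. apply (Rmult_le_reg_r z); [lra|]. unfold Rdiv. rewrite Rmult_assoc, Rinv_l by lra. lra. Qed.

Lemma pot_k_bound a n d k i : 0 < d <= 1 -> sorted_nonneg a n -> (1 <= n)%nat -> (i <= n)%nat ->
  Pot1 d n k i -> Pot2 a n d k i -> INR k <= Kb a n d.
Proof.
  intros Hd Hs Hn Hi P1 [_ P3]. unfold Kb. apply Rmin_glb.
  - unfold K1, Pot1 in *. apply div_le_by.
    + rewrite <- ln_1. apply ln_increasing; lra.
    + rewrite <- ln_pow by lra. apply ln_le'; [apply pow_lt; lra|].
      assert (INR (n - i) <= INR n) by (apply le_INR; lia).
      assert (d * INR (n - i) <= INR n).
      { assert (0 <= INR (n - i)) by apply pos_INR. nra. } lra.
  - assert (Hl : 0 < ln (1 + d)) by (rewrite <- ln_1; apply ln_increasing; lra).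
    unfold K2. destruct k as [|k].
    + simpl. destruct (minpos a n) as [xm|] eqn:E; [|lra].
      destruct (minpos_some a n xm E) as [Hx [j [Hj ->]]].
      assert (a j <= a n) by (apply (sorted_le a n); [assumption|lia..]).
      assert (0 <= ln (a n / a j)).
      { apply ln_nonneg. apply (Rmult_le_reg_r (a j)); [lra|]. unfold Rdiv.
        rewrite Rmult_assoc, Rinv_l by lra. lra. }
      assert (0 <= ln (a n / a j) / ln (1 + d)) by (unfold Rdiv; apply Rmult_le_pos; [lra| left; apply Rinv_0_lt_compat; lra]). lra.
    + destruct (P3 ltac:(lia)) as [j [Hj [Haj Hp]]].
      destruct (minpos a n) as [xm|] eqn:E; [|exfalso; apply (minpos_none a n j); assumption].
      pose proof (minpos_le a n xm E j Hj Haj) as Hxj.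
      destruct (minpos_some a n xm E) as [Hx _].
      rewrite S_INR. simpl in Hp. rewrite Nat.sub_0_r in Hp.
      assert (Hq : (1 + d) ^ k <= a n / xm).
      { apply div_le_by; [lra|].
        assert (0 <= (1 + d) ^ k) by (apply pow_le; lra).
        assert ((1 + d) ^ k * xm <= (1 + d) ^ k * a j) by (apply Rmult_le_compat_l; lra). lra. }
      assert (INR k <= ln (a n / xm) / ln (1 + d)).
      { apply div_le_by; [lra|]. rewrite <- ln_pow by lra. apply ln_le'; [apply pow_lt; lra|exact Hq]. }
      lra.
Qed.

Lemma J_bound n j : (2 ^ (2 ^ j) <= n)%nat -> INR j + 1 <= Jmax n.
Proof.
  intros H. apply le_INR in H. rewrite pow_INR in H. replace (INR 2) with 2 in H by (simpl; lra).
  assert (Hl2 := ln2_pos).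
  assert (H1 : INR (2 ^ j) * ln 2 <= ln (INR n)).
  { rewrite <- ln_pow by lra. apply ln_le'; [apply pow_lt; lra|exact H]. }
  rewrite pow_INR in H1. replace (INR 2) with 2 in H1 by (simpl; lra).
  assert (Hp : 1 <= 2 ^ j) by (apply pow_R1_Rle; lra).
  assert (Hlog : 2 ^ j <= 2 * (1 + ln (INR n))).
  { assert (2 ^ j * ln 2 <= ln (INR n)) by exact H1.
    assert (2 ^ j * / 2 <= 2 ^ j * ln 2) by (apply Rmult_le_compat_l; lra). lra. }
  assert (Hln : 0 <= ln (INR n)) by (assert (0 < 2 ^ j * ln 2) by (apply Rmult_lt_0_compat; lra); lra).
  assert (INR j * ln 2 <= ln 2 + ln (1 + ln (INR n))).
  { rewrite <- ln_pow by lra. rewrite <- ln_mult by lra. apply ln_le'; [apply pow_lt; lra| exact Hlog]. }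
  unfold Jmax.
  assert (INR j <= 1 + ln (1 + ln (INR n)) / ln 2).
  { assert (INR j - 1 <= ln (1 + ln (INR n)) / ln 2) by (apply div_le_by; lra). lra. }
  lra.
Qed.

Lemma b_bound d t : 0 < d -> d * 2 ^ t < 2 -> INR t + 1 <= bmax d.
Proof.
  intros Hd H. assert (Hl2 := ln2_pos).
  assert (ln (d * 2 ^ t) < ln 2) by (apply ln_increasing; [apply Rmult_lt_0_compat; [lra|apply pow_lt; lra]|lra]).
  rewrite ln_mult, ln_pow in H0 by (try apply pow_lt; lra).
  unfold bmax. rewrite ln_Rinv by lra.
  assert (INR t - 1 <= - ln d / ln 2) by (apply div_le_by; lra). lra.
Qed.


Lemma div_den_le (x y z : R) : 0 <= x -> 0 < y -> y <= z -> x / z <= x / y.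
Proof. intros. unfold Rdiv. apply Rmult_le_compat_l; [lra|]. apply Rinv_le_contravar; lra. Qed.

Lemma div_ln2 x : 0 <= x -> x / ln 2 <= 2 * x.
Proof.
  intros. assert (Hl := ln2_pos).
  eapply Rle_trans; [apply (div_den_le x (/2)); lra|]. unfold Rdiv. rewrite Rinv_inv. lra.
Qed.

Lemma log_ratio_eq a n : sorted_nonneg a n -> (1 <= n)%nat ->
  log_ratio a n = match minpos a n with None => 0 | Some xm => ln (a n / xm) end.
Proof. intros. unfold log_ratio. rewrite (maxR_sorted a n n) by (auto; lia). reflexivity. Qed.

Lemma bound_main n eps a : (1 <= n)%nat -> 0 < eps < 1 -> sorted_nonneg a n ->
  7 + (Kb a n (eps / 3) + 1) * PB n (eps / 3) <= 30000 * time_bound eps n (log_ratio a n).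
Proof.
  intros Hn He Hs. assert (Hl2 := ln2_pos).
  assert (Hln2 : ln 2 <= 1) by (pose proof (ln_xm1 2); lra).
  assert (Hln3 : ln 3 <= 2) by (pose proof (ln_xm1 3); lra).
  set (Ln := ln (INR n)).
  assert (HLn : 0 <= Ln) by (apply ln_nonneg; apply (le_INR 1); lia).
  set (LL := ln (1 + Ln)).
  assert (HLL : 0 <= LL) by (apply ln_nonneg; lra).
  set (Le := ln (/ eps)).
  assert (HLe : 0 <= Le) by (apply ln_nonneg; rewrite <- Rinv_1; apply Rinv_le_contravar; lra).
  set (lr := log_ratio a n).
  assert (Hlr : lr = match minpos a n with None => 0 | Some xm => ln (a n / xm) end)
    by (apply log_ratio_eq; auto).
  assert (Hlr0 : 0 <= lr).
  { rewrite Hlr. destruct (minpos a n) as [xm|] eqn:E; [|lra].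
    destruct (minpos_some a n xm E) as [Hx [j [Hj ->]]].
    assert (a j <= a n) by (apply (sorted_le a n); [assumption|lia..]).
    apply ln_nonneg. apply (Rmult_le_reg_r (a j)); [lra|]. unfold Rdiv.
    rewrite Rmult_assoc, Rinv_l by lra. lra. }
  set (A := 1 + Rmin Ln lr).
  set (Th := 1 + Le + LL).
  assert (Hie : 1 <= / eps) by (rewrite <- Rinv_1; apply Rinv_le_contravar; lra).
  assert (HA : 1 <= A) by (unfold A; apply Rmin_case; lra).
  assert (HTh : 1 <= Th) by (unfold Th; lra).
  assert (Htb : time_bound eps n lr = / eps * A * Th) by reflexivity.
  assert (C1 : Kb a n (eps / 3) + 1 <= 25 * / eps * A).
  { assert (HK1 : K1 n (eps / 3) <= 24 * / eps * (1 + Ln)).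
    { unfold K1. 
      assert (ln (1 + INR n) <= 1 + Ln).
      { unfold Ln. assert (1 + INR n <= 2 * INR n) by (assert (1 <= INR n) by (apply (le_INR 1); lia); lra).
        assert (ln (1 + INR n) <= ln (2 * INR n)) by (apply ln_le'; [pose proof (pos_INR n); lra|lra]).
        rewrite ln_mult in H0 by (try apply (lt_INR 0); lia || lra). lra. }
      assert (eps / 3 / 4 / 2 <= ln (1 + eps / 3 / 4)) by (apply ln_1px_half; lra).
      replace (eps / 3 / 4) with (eps / 3 / 4) in H0 by reflexivity.
      assert (E : eps / 3 / 4 = eps / 3 / 4) by reflexivity.
      eapply Rle_trans.
      { apply (div_den_le _ (eps / 3 / 4 / 2)); [apply ln_nonneg; pose proof (pos_INR n); lra|lra|].
        replace (eps / 3 / 4) with (eps / 3 / 4) by reflexivity. unfold Rdiv at 3 4. lra. }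
      assert (ln (1 + INR n) / (eps / 3 / 4 / 2) = 24 * / eps * ln (1 + INR n)) by (field; lra).
      rewrite H1. apply Rmult_le_compat_l; [lra|exact H]. }
    assert (HK2 : K2 a n (eps / 3) <= 1 + 6 * / eps * lr).
    { unfold K2. rewrite Hlr. destruct (minpos a n) as [xm|]; [|assert (0 <= 6 * / eps * 0) by lra; lra].
      assert (eps / 3 / 2 <= ln (1 + eps / 3)) by (apply ln_1px_half; lra).
      assert (Hl0 : 0 <= ln (a n / xm)) by (rewrite Hlr in Hlr0; exact Hlr0).
      assert (ln (a n / xm) / ln (1 + eps / 3) <= ln (a n / xm) / (eps / 3 / 2))
        by (apply div_den_le; lra).
      assert (ln (a n / xm) / (eps / 3 / 2) = 6 * / eps * ln (a n / xm)) by (field; lra). lra. }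
    unfold Kb, A. apply Rmin_case_strong; intros Hm.
    -
      destruct (Rle_lt_dec Ln lr) as [h|h].
      + rewrite Rmin_left by lra.
        assert (24 * / eps * (1 + Ln) + 1 <= 25 * / eps * (1 + Ln)) by nra. lra.
      + rewrite Rmin_right by lra.
        assert (1 + 6 * / eps * lr + 1 <= 25 * / eps * (1 + lr)) by nra. lra.
    - destruct (Rle_lt_dec Ln lr) as [h|h].
      + rewrite Rmin_left by lra.
        assert (24 * / eps * (1 + Ln) + 1 <= 25 * / eps * (1 + Ln)) by nra. lra.
      + rewrite Rmin_right by lra.
        assert (1 + 6 * / eps * lr + 1 <= 25 * / eps * (1 + lr)) by nra. lra. }
  assert (C2 : PB n (eps / 3) <= 900 * Th).
  { unfold PB, Jmax, bmax, Th.
    assert (ln (1 + ln (INR n)) / ln 2 <= 2 * LL) by (apply div_ln2; exact HLL).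
    assert (ln (/ (eps / 3)) = ln 3 + Le).
    { unfold Le. replace (/ (eps / 3)) with (3 * / eps) by (field; lra). apply ln_mult; [lra|].
      apply Rinv_0_lt_compat; lra. }
    assert (ln (/ (eps / 3)) / ln 2 <= 2 * (ln 3 + Le)).
    { rewrite H0. apply div_ln2. assert (0 <= ln 3) by (apply ln_nonneg; lra). lra. }
    lra. }
  rewrite Htb. fold lr.
  assert (0 <= Kb a n (eps / 3) + 1).
  { unfold Kb. apply Rmin_case.
    - unfold K1. assert (0 <= ln (1 + INR n)) by (apply ln_nonneg; pose proof (pos_INR n); lra).
      assert (0 < ln (1 + eps / 3 / 4)) by (rewrite <- ln_1; apply ln_increasing; lra).
      assert (0 <= ln (1 + INR n) / ln (1 + eps / 3 / 4)) by (unfold Rdiv; apply Rmult_le_pos; [lra|left; apply Rinv_0_lt_compat; lra]).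
      lra.
    - unfold K2. destruct (minpos a n) as [xm|] eqn:E; [|lra].
      destruct (minpos_some a n xm E) as [Hx [j [Hj ->]]].
      assert (a j <= a n) by (apply (sorted_le a n); [assumption|lia..]).
      assert (0 <= ln (a n / a j)).
      { apply ln_nonneg. apply (Rmult_le_reg_r (a j)); [lra|]. unfold Rdiv.
        rewrite Rmult_assoc, Rinv_l by lra. lra. }
      assert (0 < ln (1 + eps / 3)) by (rewrite <- ln_1; apply ln_increasing; lra).
      assert (0 <= ln (a n / a j) / ln (1 + eps / 3)) by (unfold Rdiv; apply Rmult_le_pos; [lra|left; apply Rinv_0_lt_compat; lra]).
      lra. }
  assert (0 <= PB n (eps / 3)).
  { unfold PB, Jmax, bmax.
    assert (0 <= ln (1 + ln (INR n)) / ln 2) by (unfold Rdiv; apply Rmult_le_pos; [exact HLL|left; apply Rinv_0_lt_compat; lra]).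
    assert (0 <= ln (/ (eps / 3)) / ln 2).
    { unfold Rdiv at 1. apply Rmult_le_pos; [|left; apply Rinv_0_lt_compat; lra].
      apply ln_nonneg. rewrite <- Rinv_1. apply Rinv_le_contravar; lra. }
    lra. }
  assert ((Kb a n (eps / 3) + 1) * PB n (eps / 3) <= (25 * / eps * A) * (900 * Th)).
  { apply Rmult_le_compat; auto. }
  assert (1 <= / eps * A * Th).
  { assert (1 <= / eps * A) by nra. nra. }
  nra.
Qed.


Definition P : program := [
 (*0*) IConst1 2; IAdd 3 2 2; IAdd 23 3 2; IDiv 5 1 23; IAdd 4 2 5;
 (*5*) IConst0 7; IMul 6 0 2; IJlt 6 2 99; IQuery 9 2; IQuery 8 6;
 (*10*) IMul 23 9 4; IJlt 23 8 15; IMul 23 6 9; IAdd 7 7 23; IHalt 7;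
 (*15*) ISub 23 0 6; IMul 23 5 23; IFloor 12 23; IJlt 2 12 20; IConst1 12;
 (*20*) IJlt 12 6 22; IJmp 12; ISub 10 6 12; IAdd 10 10 2; IQuery 11 10;
 (*25*) IMul 23 11 4; IJlt 23 8 95; IConst1 13; IAdd 14 2 2; IConst0 15;
 (*30*) IMul 19 12 14; IJlt 6 19 42; ISub 10 6 19; IAdd 10 10 2; IQuery 11 10;
 (*35*) IMul 23 11 4; IJlt 23 8 42; IDiv 24 15 14; IAdd 15 13 24; IMul 13 14 2;
 (*40*) IMul 14 14 14; IJmp 30; IMul 16 13 2; IMul 17 13 2; IFloor 18 15;
 (*45*) IJlt 18 3 59; IMul 19 12 16; IMul 19 19 18; IJlt 6 19 55; ISub 10 6 19;
 (*50*) IAdd 10 10 2; IQuery 11 10; IMul 23 11 4; IJlt 23 8 55; IMul 16 16 18;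
 (*55*) ISub 24 15 18; IMul 15 24 17; IMul 17 18 2; IJmp 44; IMul 20 12 16;
 (*60*) IMul 21 20 3; IJlt 6 21 63; IJmp 64; IMul 21 6 2; ISub 22 21 20;
 (*65*) IJlt 2 22 67; IJmp 82; IMul 23 5 20; IJlt 23 22 70; IJmp 82;
 (*70*) IAdd 22 20 21; IDiv 22 22 3; IFloor 22 22; ISub 10 6 22; IAdd 10 10 2;
 (*75*) IQuery 11 10; IMul 23 11 4; IJlt 23 8 80; IMul 20 22 2; IJmp 64;
 (*80*) IMul 21 22 2; IJmp 64; ISub 10 6 20; IAdd 10 10 2; IQuery 11 10;
 (*85*) IMul 23 20 11; IAdd 7 7 23; ISub 10 6 21; IAdd 10 10 2; IQuery 11 10;
 (*90*) ISub 24 21 20; IMul 23 24 11; IAdd 7 7 23; ISub 6 6 21; IJmp 7;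
 (*95*) IMul 23 12 11; IAdd 7 7 23; ISub 6 6 12; IJmp 7; IHalt 7 ].

Lemma run_S p a f pc r : run p a (S f) pc r =
  match nth_error p pc with None => None | Some i =>
      match i with
      | IConst0 d => run p a f (S pc) (upd r d 0)
      | IConst1 d => run p a f (S pc) (upd r d 1)
      | IAdd d x y => run p a f (S pc) (upd r d (r x + r y))
      | ISub d x y => run p a f (S pc) (upd r d (r x - r y))
      | IMul d x y => run p a f (S pc) (upd r d (r x * r y))
      | IDiv d x y => run p a f (S pc) (upd r d (r x / r y))
      | IFloor d x => run p a f (S pc) (upd r d (floorR (r x)))
      | IQuery d x => run p a f (S pc) (upd r d (a (Z.to_nat (Int_part (r x)))))
      | IJlt x y t => if Rlt_dec (r x) (r y) then run p a f t r
                      else run p a f (S pc) r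
      | IJmp t => run p a f t r
      | IHalt x => Some (r x)
      end end.
Proof. reflexivity. Qed.

Lemma upd_hit r d v k : Nat.eqb k d = true -> upd r d v k = v.
Proof. unfold upd. intros ->. reflexivity. Qed.
Lemma upd_miss r d v k : Nat.eqb k d = false -> upd r d v k = r k.
Proof. unfold upd. intros ->. reflexivity. Qed.

Ltac rd := repeat match goal with
  | |- context [upd ?r ?d ?v ?k] =>
      first [rewrite (upd_hit r d v k) by reflexivity | rewrite (upd_miss r d v k) by reflexivity]
  end.
Ltac rdH H := repeat match type of H with
  | context [upd ?r ?d ?v ?k] =>
      first [rewrite (upd_hit r d v k) in H by reflexivity | rewrite (upd_miss r d v k) in H by reflexivity]
  end.

Ltac stp := cbn [Nat.add]; rewrite run_S;
  match goal with |- context[nth_error P ?k] =>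
    let e := eval vm_compute in (nth_error P k) in change (nth_error P k) with e end;
  cbv iota beta.

Lemma run_mono p a f pc r s : run p a f pc r = Some s -> forall m, run p a (f + m) pc r = Some s.
Proof.
  revert pc r. induction f as [|f IH]; intros pc r H m; [discriminate|].
  simpl in H |- *. destruct (nth_error p pc) as [i|]; [|discriminate].
  destruct i; try (apply IH; exact H); try exact H.
  destruct (Rlt_dec (r x) (r y)); apply IH; exact H.
Qed.

Lemma idx_eq (i L : nat) : (L <= i)%nat -> INR i - INR L + 1 = INR (i - L + 1).
Proof. intros. rewrite plus_INR, minus_INR by lia. simpl. lra. Qed.


Definition pw (j : nat) : nat := (2 ^ (2 ^ j))%nat.
Definition pv (j : nat) : nat := match j with O => 1%nat | S j' => pw j' end.
Fixpoint enc (j : nat) : R := match j with O => 0 | S j' => INR (pv j') + enc j' / INR (pw j') end.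

Lemma pw_S j : pw (S j) = (pw j * pw j)%nat.
Proof. unfold pw. rewrite Nat.pow_succ_r'. rewrite <- Nat.pow_add_r. f_equal. lia. Qed.

Lemma pw_ge2 j : (2 <= pw j)%nat.
Proof. induction j; [unfold pw; simpl; lia|]. rewrite pw_S. nia. Qed.

Lemma pv_le_pw j : (pv j < pw j)%nat.
Proof. destruct j; simpl; [pose proof (pw_ge2 0); lia|]. rewrite pw_S. pose proof (pw_ge2 j). nia. Qed.

Lemma pv_ge1 j : (1 <= pv j)%nat.
Proof. destruct j; simpl; [lia|]. pose proof (pw_ge2 j); lia. Qed.

Lemma pv_pw j : (pv j * pw (j - 1))%nat = pw j.
Proof. destruct j. - reflexivity. - simpl pv. replace (S j - 1)%nat with j by lia. rewrite pw_S. reflexivity. Qed.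

Lemma enc_bound j : 0 <= enc j < INR (pw j).
Proof.
  induction j; simpl enc.
  - pose proof (pw_ge2 0). apply le_INR in H. simpl in H. split; [lra|]. simpl INR in *. lra.
  - pose proof (pw_ge2 j). assert (HP: 0 < INR (pw j)) by (apply (lt_INR 0); lia).
    assert (0 <= enc j / INR (pw j) < 1).
    { split. apply Rmult_le_pos; [lra|left; apply Rinv_0_lt_compat; lra].
      apply (Rmult_lt_reg_r (INR (pw j))); [lra|]. unfold Rdiv. rewrite Rmult_assoc, Rinv_l by lra. lra. }
    assert (pv j + 1 <= pw (S j))%nat.
    { rewrite pw_S. pose proof (pv_le_pw j). nia. }
    apply le_INR in H1. rewrite plus_INR in H1. simpl (INR 1) in H1.
    pose proof (pos_INR (pv j)). lra.
Qed.

Definition Pq (a : nat -> R) (i : nat) (d : R) (L : nat) : Prop :=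
  (L <= i)%nat /\ a i <= a (i - L + 1)%nat * (1 + d).

Definition base (r : regs) n d i O ai B :=
  r 0%nat = INR n /\ r 2%nat = 1 /\ r 3%nat = 2 /\ r 4%nat = 1 + d /\ r 5%nat = d /\
  r 6%nat = INR i /\ r 7%nat = O /\ r 8%nat = ai /\ r 12%nat = INR B.

Definition nb (k : nat) : bool :=
  negb (Nat.eqb k 0) && negb (Nat.eqb k 2) && negb (Nat.eqb k 3) && negb (Nat.eqb k 4) &&
  negb (Nat.eqb k 5) && negb (Nat.eqb k 6) && negb (Nat.eqb k 7) && negb (Nat.eqb k 8) &&
  negb (Nat.eqb k 12).

Lemma base_upd r n d i O ai B k v : nb k = true -> base r n d i O ai B -> base (upd r k v) n d i O ai B.
Proof.
  intros Hk (H0 & H2 & H3 & H4 & H5 & H6 & H7 & H8 & H12). unfold nb in Hk.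
  repeat match goal with H: andb _ _ = true |- _ => apply andb_prop in H; destruct H end.
  repeat match goal with H: negb _ = true |- _ => apply Bool.negb_true_iff in H; rewrite Nat.eqb_sym in H end.
  unfold base, upd.
  repeat match goal with H: Nat.eqb _ _ = false |- _ => rewrite H; clear H end. tauto.
Qed.

Ltac base_keep := repeat (apply base_upd; [reflexivity|]).

Lemma qidx i L : (L <= i)%nat -> Z.to_nat (Int_part (INR i - INR L + 1)) = (i - L + 1)%nat.
Proof. intros. rewrite idx_eq by assumption. apply idx_INR. Qed.


Ltac br c := destruct (Rlt_dec _ _) as [c|c]; rdH c.
Ltac bsplit := match goal with |- base _ _ _ _ _ _ _ => idtac end.

Section Gallop.
Variables (a : nat -> R) (n : nat) (d : R) (i : nat) (O : R) (B : nat).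
Hypotheses (Hd : 0 < d) (HB : (1 <= B)%nat) (HBi : (B < i)%nat) (Hin : (i <= n)%nat).

Lemma gallop_step j r : base r n d i O (a i) B -> r 13%nat = INR (pv j) -> r 14%nat = INR (pw j) ->
  r 15%nat = enc j ->
  (exists N r1, (N <= 7)%nat /\ (forall f, run P a (N + f) 30 r = run P a f 42 r1) /\
     base r1 n d i O (a i) B /\ r1 13%nat = INR (pv j) /\ r1 15%nat = enc j /\ ~ Pq a i d (B * pw j)) \/
  (Pq a i d (B * pw j) /\ exists r1, (forall f, run P a (12 + f) 30 r = run P a f 30 r1) /\
     base r1 n d i O (a i) B /\ r1 13%nat = INR (pv (S j)) /\ r1 14%nat = INR (pw (S j)) /\
     r1 15%nat = enc (S j)).
Proof.
  intros Hb H13 H14 H15. pose proof Hb as (H0 & H2 & H3 & H4 & H5 & H6 & H7 & H8 & H12).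
  destruct (Rlt_dec (INR i) (INR B * INR (pw j))) as [c1|c1].
  - left. exists 2%nat. eexists. split; [lia|]. split.
    { intros f. stp. stp. br c; rewrite H6, H12, H14 in c; [reflexivity|contradiction]. }
    split; [base_keep; exact Hb|]. rd. split; [exact H13|]. split; [exact H15|].
    intros [Hle _]. apply le_INR in Hle. rewrite mult_INR in Hle. lra.
  - assert (HL : (B * pw j <= i)%nat).
    { apply INR_le. rewrite mult_INR. lra. }
    destruct (Rlt_dec (a (i - B * pw j + 1)%nat * (1 + d)) (a i)) as [c2|c2].
    + left. exists 7%nat. eexists. split; [lia|]. split.
      { intros f. stp. stp. br c; rewrite H6, H12, H14 in c; [contradiction|].
        stp. stp. stp. stp. rd. rewrite H6, H12, H14, H2. rewrite <- mult_INR, qidx by exact HL.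
        stp. br c'; rewrite H4, H8 in c'; [reflexivity|contradiction]. }
      split; [base_keep; exact Hb|]. rd. split; [exact H13|]. split; [exact H15|].
      intros [_ Hq]. lra.
    + right. split; [split; [exact HL|lra]|].
      eexists. split.
      { intros f. stp. stp. br c; rewrite H6, H12, H14 in c; [contradiction|].
        stp. stp. stp. stp. rd. rewrite H6, H12, H14, H2. rewrite <- mult_INR, qidx by exact HL.
        stp. br c'; rewrite H4, H8 in c'; [contradiction|].
        stp. stp. stp. stp. stp. reflexivity. }
      split; [base_keep; exact Hb|]. rd.
      rewrite H13, H14, H15, H2. split; [simpl pv; lra|]. split.
      * rewrite pw_S, mult_INR. reflexivity.
      * simpl enc. reflexivity.
Qed.
End Gallop.

Section GallopLoop.
Variables (a : nat -> R) (n : nat) (d : R) (i : nat) (O : R) (B : nat).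
Hypotheses (Hd : 0 < d) (HB : (1 <= B)%nat) (HBi : (B < i)%nat) (Hin : (i <= n)%nat).

Lemma gallop_loop M : forall j r, (S i - pw j <= M)%nat -> base r n d i O (a i) B ->
  r 13%nat = INR (pv j) -> r 14%nat = INR (pw j) -> r 15%nat = enc j ->
  (forall t, (t < j)%nat -> Pq a i d (B * pw t)) ->
  exists N J r', (forall f, run P a (N + f) 30 r = run P a f 42 r') /\
    base r' n d i O (a i) B /\ r' 13%nat = INR (pv J) /\ r' 15%nat = enc J /\
    (forall t, (t < J)%nat -> Pq a i d (B * pw t)) /\ ~ Pq a i d (B * pw J) /\
    (N <= 12 * (J - j) + 7)%nat /\ (j <= J)%nat.
Proof.
  induction M as [|M IH]; intros j r HM Hb H13 H14 H15 Hall;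
  destruct (gallop_step a n d i O B HB HBi Hin j r Hb H13 H14 H15) as
    [(N & r1 & HN & Hrun & Hb1 & E13 & E15 & Hnq) | (Hq & r1 & Hrun & Hb1 & E13 & E14 & E15)].
  - exists N, j, r1. refine (conj Hrun (conj Hb1 (conj E13 (conj E15 (conj Hall (conj Hnq (conj _ _))))))); lia.
  - exfalso. destruct Hq as [Hq _]. assert (pw j <= B * pw j)%nat by (apply Nat.le_mul_l; lia). lia.
  - exists N, j, r1. refine (conj Hrun (conj Hb1 (conj E13 (conj E15 (conj Hall (conj Hnq (conj _ _))))))); lia.
  - assert (HM' : (S i - pw (S j) <= M)%nat).
    { destruct Hq as [Hq _]. rewrite pw_S. pose proof (pw_ge2 j). assert (pw j <= B * pw j)%nat by (apply Nat.le_mul_l; lia). assert (2 * pw j <= pw j * pw j)%nat by (apply Nat.mul_le_mono_r; lia). lia. }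
    assert (Hall' : forall t, (t < S j)%nat -> Pq a i d (B * pw t)).
    { intros t Ht. destruct (Nat.eq_dec t j) as [->|]; [exact Hq|]. apply Hall; lia. }
    destruct (IH (S j) r1 HM' Hb1 E13 E14 E15 Hall') as (N' & J & r' & Hr' & Hb' & F13 & F15 & FA & FN & FC & FJ).
    exists (12 + N')%nat, J, r'. split.
    { intros f. rewrite <- Nat.add_assoc, Hrun. apply Hr'. }
    refine (conj Hb' (conj F13 (conj F15 (conj _ (conj FN (conj _ _)))))); [intros t Ht; apply FA; lia|lia|lia].
Qed.
End GallopLoop.


Lemma enc_SS u : enc (S (S u)) = INR (pw u) + enc (S u) / INR (pw (S u)).
Proof. reflexivity. Qed.

Lemma enc_frac u : 0 <= enc u / INR (pw u) < 1.
Proof.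
  pose proof (enc_bound u). pose proof (pw_ge2 u). assert (HP: 0 < INR (pw u)) by (apply (lt_INR 0); lia).
  split. apply Rmult_le_pos; [lra|left; apply Rinv_0_lt_compat; lra].
  apply (Rmult_lt_reg_r (INR (pw u))); [lra|]. unfold Rdiv. rewrite Rmult_assoc, Rinv_l by lra. lra.
Qed.

Lemma lift_exit a n d i O B (t : nat) r : (t <= 1)%nat -> base r n d i O (a i) B ->
  r 15%nat = enc t -> exists r1, (forall f, run P a (2 + f) 44 r = run P a f 59 r1) /\
  base r1 n d i O (a i) B /\ r1 16%nat = r 16%nat.
Proof.
  intros Ht Hb H15. pose proof Hb as (H0 & H2 & H3 & H4 & H5 & H6 & H7 & H8 & H12).
  assert (Hx : floorR (enc t) < 2).
  { destruct t as [|[|t]].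
    - simpl enc. replace 0 with (INR 0) by reflexivity. rewrite floorR_INR. simpl. lra.
    - assert (E : enc 1 = INR 1 + 0) by (simpl; unfold Rdiv; ring). rewrite E, floorR_INR_plus by lra. simpl. lra.
    - lia. }
  eexists. split.
  { intros f. stp. stp. rd. rewrite H15, H3. br c; [reflexivity|contradiction]. }
  split; [base_keep; exact Hb|]. rd. reflexivity.
Qed.

Lemma lift_step a n d i O B m u r : base r n d i O (a i) B ->
  r 15%nat = enc (S (S u)) -> r 17%nat = INR (pw (S u)) -> r 16%nat = INR m -> (1 <= m)%nat ->
  Pq a i d (B * m) -> ~ Pq a i d (B * m * pw (S u)) ->
  exists N r1 m1, (N <= 15)%nat /\ (forall f, run P a (N + f) 44 r = run P a f 44 r1) /\
  base r1 n d i O (a i) B /\ r1 15%nat = enc (S u) /\ r1 17%nat = INR (pw u) /\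
  r1 16%nat = INR m1 /\ (1 <= m1)%nat /\ Pq a i d (B * m1) /\ ~ Pq a i d (B * m1 * pw u).
Proof.
  intros Hb H15 H17 H16 Hm Hq Hnq. pose proof Hb as (H0 & H2 & H3 & H4 & H5 & H6 & H7 & H8 & H12).
  assert (Hx : floorR (enc (S (S u))) = INR (pw u)).
  { rewrite enc_SS. apply floorR_INR_plus. apply enc_frac. }
  assert (Hx2 : ~ (INR (pw u) < 2)).
  { pose proof (pw_ge2 u). apply le_INR in H. simpl in H. lra. }
  assert (HPw : 0 < INR (pw (S u))) by (pose proof (pw_ge2 (S u)); apply (lt_INR 0); lia).
  assert (Hpop : (enc (S (S u)) - INR (pw u)) * INR (pw (S u)) = enc (S u)).
  { rewrite enc_SS. field. lra. }
  assert (HL : INR B * INR m * INR (pw u) = INR (B * m * pw u)) by (rewrite !mult_INR; reflexivity).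
  assert (Hsq : (B * m * pw u * pw u = B * m * pw (S u))%nat) by (rewrite pw_S; ring).
  destruct (Rlt_dec (INR i) (INR (B * m * pw u))) as [c1|c1].
  -
    exists 9%nat. eexists. exists m. split; [lia|]. split.
    { intros f. stp. stp. rd. rewrite H15, H3, Hx. br c; [contradiction|].
      stp. stp. stp. rd. rewrite ?H6, ?H12, ?H16, ?HL. br c'; [|contradiction].
      stp. stp. stp. stp. reflexivity. }
    split; [base_keep; exact Hb|]. rd. rewrite ?H15, ?H17, ?Hx, ?H2.
    split; [exact Hpop|]. split; [lra|]. split; [exact H16|]. split; [exact Hm|]. split; [exact Hq|].
    intros [Hle _]. apply le_INR in Hle. lra.
  - assert (HLi : (B * m * pw u <= i)%nat) by (apply INR_le; lra).
    destruct (Rlt_dec (a (i - B * m * pw u + 1)%nat * (1 + d)) (a i)) as [c2|c2].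
    + exists 14%nat. eexists. exists m. split; [lia|]. split.
      { intros f. stp. stp. rd. rewrite H15, H3, Hx. br c; [contradiction|].
        stp. stp. stp. rd. rewrite ?H6, ?H12, ?H16, ?HL. br c'; [contradiction|].
        stp. stp. stp. stp. rd. rewrite ?H6, ?H2, ?H4, ?H8, ?H12, ?H16, ?H15, ?Hx, ?HL, qidx by exact HLi. stp.
        br c''; rewrite ?H8 in c''; [|contradiction]. stp. stp. stp. stp. reflexivity. }
      split; [base_keep; exact Hb|]. rd. rewrite ?H15, ?H17, ?Hx, ?H2.
      split; [exact Hpop|]. split; [lra|]. split; [exact H16|]. split; [exact Hm|]. split; [exact Hq|].
      intros [_ Hq']. lra.
    + exists 15%nat. eexists. exists (m * pw u)%nat. split; [lia|]. split.
      { intros f. stp. stp. rd. rewrite H15, H3, Hx. br c; [contradiction|].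
        stp. stp. stp. rd. rewrite ?H6, ?H12, ?H16, ?HL. br c'; [contradiction|].
        stp. stp. stp. stp. rd. rewrite ?H6, ?H2, ?H4, ?H8, ?H12, ?H16, ?H15, ?Hx, ?HL, qidx by exact HLi. stp.
        br c''; rewrite ?H8 in c''; [contradiction|]. stp. stp. stp. stp. stp. reflexivity. }
      split; [base_keep; exact Hb|]. rd. rewrite ?H15, ?H17, ?Hx, ?H2, ?H16.
      split; [exact Hpop|]. split; [lra|]. split; [rewrite mult_INR; reflexivity|].
      split; [pose proof (pw_ge2 u); nia|]. split.
      * rewrite Nat.mul_assoc. split; [exact HLi|lra].
      * rewrite Nat.mul_assoc, Hsq. exact Hnq.
Qed.

Lemma pw0 : pw 0 = 2%nat. Proof. reflexivity. Qed.

Lemma lift_loop a n d i O B t : forall m r, base r n d i O (a i) B ->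
  r 15%nat = enc t -> ((1 <= t)%nat -> r 17%nat = INR (pw (t - 1))) -> r 16%nat = INR m -> (1 <= m)%nat ->
  Pq a i d (B * m) -> ~ Pq a i d (B * m * pw (t - 1)) ->
  exists N m' r', (forall f, run P a (N + f) 44 r = run P a f 59 r') /\
  base r' n d i O (a i) B /\ r' 16%nat = INR m' /\ (1 <= m')%nat /\ Pq a i d (B * m') /\
  ~ Pq a i d (B * m' * 2) /\ (N <= 15 * t + 2)%nat.
Proof.
  induction t as [t IH] using lt_wf_ind. intros m r Hb H15 H17 H16 Hm Hq Hnq.
  destruct t as [|[|u]].
  - destruct (lift_exit a n d i O B 0 r ltac:(lia) Hb H15) as (r1 & Hr & Hb1 & E16).
    exists 2%nat, m, r1. refine (conj Hr (conj Hb1 (conj _ (conj Hm (conj Hq (conj _ _)))))); [congruence| |lia].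
    rewrite <- pw0. exact Hnq.
  - destruct (lift_exit a n d i O B 1 r ltac:(lia) Hb H15) as (r1 & Hr & Hb1 & E16).
    exists 2%nat, m, r1. refine (conj Hr (conj Hb1 (conj _ (conj Hm (conj Hq (conj _ _)))))); [congruence| |lia].
    rewrite <- pw0. exact Hnq.
  - specialize (H17 ltac:(lia)). replace (S (S u) - 1)%nat with (S u) in H17, Hnq by lia.
    destruct (lift_step a n d i O B m u r Hb H15 H17 H16 Hm Hq Hnq)
      as (N & r1 & m1 & HN & Hr & Hb1 & E15 & E17 & E16 & Hm1 & Hq1 & Hnq1).
    destruct (IH (S u) ltac:(lia) m1 r1 Hb1 E15 ltac:(intros; replace (S u - 1)%nat with u by lia; exact E17)
       E16 Hm1 Hq1 ltac:(replace (S u - 1)%nat with u by lia; exact Hnq1))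
      as (N' & m' & r' & Hr' & Hb' & F16 & Fm & Fq & Fnq & FN).
    exists (N + N')%nat, m', r'. split.
    { intros f. rewrite <- Nat.add_assoc, Hr. apply Hr'. }
    refine (conj Hb' (conj F16 (conj Fm (conj Fq (conj Fnq _))))). lia.
Qed.


Definition drop (a : nat -> R) (i : nat) (d : R) (hi : nat) := a (i - hi + 1)%nat * (1 + d) < a i.

Definition binv a i d B t lo hi :=
  (B <= lo)%nat /\ (lo < hi)%nat /\ (hi <= i)%nat /\ Pq a i d lo /\ drop a i d hi /\
  (2 ^ t * (hi - lo - 1) <= lo)%nat.

Lemma bis_exit a n d i O B t lo hi r : base r n d i O (a i) B -> r 20%nat = INR lo -> r 21%nat = INR hi ->
  binv a i d B t lo hi -> ~ (1 < INR (hi - lo) /\ d * INR lo < INR (hi - lo)) ->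
  exists N r1, (N <= 5)%nat /\ (forall f, run P a (N + f) 64 r = run P a f 82 r1) /\
  base r1 n d i O (a i) B /\ r1 20%nat = INR lo /\ r1 21%nat = INR hi.
Proof.
  intros Hb H20 H21 (HBl & Hlh & Hhi & _) Hc. pose proof Hb as (H0 & H2 & H3 & H4 & H5 & H6 & H7 & H8 & H12).
  assert (Eg : INR hi - INR lo = INR (hi - lo)) by (rewrite minus_INR by lia; reflexivity).
  destruct (Rlt_dec 1 (INR (hi - lo))) as [c1|c1].
  - assert (c2 : ~ d * INR lo < INR (hi - lo)) by tauto.
    exists 5%nat. eexists. split; [lia|]. split.
    { intros f. stp. stp. rd. rewrite ?H20, ?H21, ?H2, ?Eg. br c; [|contradiction].
      stp. stp. rd. rewrite ?H5, ?H20, ?H21, ?Eg. br c'; [contradiction|]. stp. reflexivity. }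
    split; [base_keep; exact Hb|]. rd. auto.
  - exists 3%nat. eexists. split; [lia|]. split.
    { intros f. stp. stp. rd. rewrite ?H20, ?H21, ?H2, ?Eg. br c; [contradiction|]. stp. reflexivity. }
    split; [base_keep; exact Hb|]. rd. auto.
Qed.

Lemma bis_step a n d i O B t lo hi r : 0 < d -> base r n d i O (a i) B -> r 20%nat = INR lo -> r 21%nat = INR hi ->
  binv a i d B t lo hi -> 1 < INR (hi - lo) -> d * INR lo < INR (hi - lo) ->
  d * 2 ^ t < 2 /\
  exists lo' hi' r1, (forall f, run P a (14 + f) 64 r = run P a f 64 r1) /\
  base r1 n d i O (a i) B /\ r1 20%nat = INR lo' /\ r1 21%nat = INR hi' /\
  binv a i d B (S t) lo' hi' /\ (hi' - lo' < hi - lo)%nat.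
Proof.
  intros Hd Hb H20 H21 (HBl & Hlh & Hhi & Hq & Hdr & Ht) c1 c2.
  pose proof Hb as (H0 & H2 & H3 & H4 & H5 & H6 & H7 & H8 & H12).
  assert (Eg : INR hi - INR lo = INR (hi - lo)) by (rewrite minus_INR by lia; reflexivity).
  assert (Hg2 : (2 <= hi - lo)%nat).
  { destruct (le_lt_dec 2 (hi - lo)); [assumption|].
    assert (hi - lo <= 1)%nat by lia. apply le_INR in H. simpl in H. lra. }
  split.
  {
    apply le_INR in Ht. rewrite mult_INR, pow_INR, minus_INR in Ht by lia.
    replace (INR 2) with 2 in Ht by (simpl; lra).
    rewrite minus_INR in Ht, c2 by lia.
    assert (Hg : 2 <= INR hi - INR lo) by (rewrite <- minus_INR by lia; apply (le_INR 2); lia).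
    assert (Hp : 0 < 2 ^ t) by (apply pow_lt; lra).
    set (G := INR hi - INR lo) in *.
    assert (A1 : 2 ^ t * G <= 2 ^ t * (2 * (G - 1))) by (apply Rmult_le_compat_l; lra).
    replace (INR 1) with 1 in Ht by reflexivity. assert (A1b : 2 ^ t * (2 * (G - 1)) = 2 * (2 ^ t * (G - 1))) by ring. assert (A2 : 2 ^ t * G <= 2 * INR lo) by lra.
    assert (A3 : d * (2 ^ t * G) <= d * (2 * INR lo)) by (apply Rmult_le_compat_l; lra).
    assert (A4 : d * 2 ^ t * G < 2 * G) by (rewrite Rmult_assoc; lra).
    apply (Rmult_lt_reg_r G); lra. }
  set (mid := ((lo + hi) / 2)%nat).
  assert (Hmid : (2 * mid <= lo + hi <= 2 * mid + 1)%nat).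
  { pose proof (Nat.div_mod (lo + hi) 2 ltac:(lia)). pose proof (Nat.mod_upper_bound (lo + hi) 2 ltac:(lia)).
    unfold mid. lia. }
  assert (Hm1 : (lo < mid < hi)%nat) by lia.
  assert (Efl : floorR ((INR lo + INR hi) / 2) = INR mid) by (rewrite <- plus_INR; apply floorR_half).
  assert (Hmi : (mid <= i)%nat) by lia.
  assert (Ecl : (2 * (mid - lo - 1) <= hi - lo - 1)%nat) by lia.
  assert (Ecr : (2 * (hi - mid - 1) <= hi - lo - 1)%nat) by lia.
  assert (Hpw : forall x, (2 * x <= hi - lo - 1)%nat -> (2 ^ S t * x <= 2 ^ t * (hi - lo - 1))%nat).
  { intros x Hx. rewrite Nat.pow_succ_r'. replace (2 * 2 ^ t * x)%nat with (2 ^ t * (2 * x))%nat by ring.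
    apply Nat.mul_le_mono_l. lia. }
  destruct (Rlt_dec (a (i - mid + 1)%nat * (1 + d)) (a i)) as [c3|c3].
  - exists lo, mid. eexists. split.
    { intros f. stp. stp. rd. rewrite ?H20, ?H21, ?H2, ?Eg. br c; [|contradiction].
      stp. stp. rd. rewrite ?H5, ?H20, ?H21, ?Eg. br c'; [|contradiction].
      stp. stp. stp. stp. stp. stp. rd. rewrite ?H20, ?H21, ?H3, ?Efl, ?H6, ?H2, qidx by exact Hmi.
      stp. stp. br c''; rewrite ?H4, ?H8 in c''; [|contradiction]. stp. stp. reflexivity. }
    split; [base_keep; exact Hb|]. rd. rewrite ?H20, ?H21, ?H3, ?Efl, ?H2.
    split; [reflexivity|]. split; [lra|]. split; [|lia].
    unfold binv. split; [exact HBl|]. split; [lia|]. split; [exact Hmi|]. split; [exact Hq|].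
    split; [exact c3|]. specialize (Hpw _ Ecl). lia.
  - exists mid, hi. eexists. split.
    { intros f. stp. stp. rd. rewrite ?H20, ?H21, ?H2, ?Eg. br c; [|contradiction].
      stp. stp. rd. rewrite ?H5, ?H20, ?H21, ?Eg. br c'; [|contradiction].
      stp. stp. stp. stp. stp. stp. rd. rewrite ?H20, ?H21, ?H3, ?Efl, ?H6, ?H2, qidx by exact Hmi.
      stp. stp. br c''; rewrite ?H4, ?H8 in c''; [contradiction|]. stp. stp. reflexivity. }
    split; [base_keep; exact Hb|]. rd. rewrite ?H20, ?H21, ?H3, ?Efl, ?H2.
    split; [lra|]. split; [reflexivity|]. split; [|lia].
    unfold binv. split; [lia|]. split; [lia|]. split; [exact Hhi|]. split; [split; [exact Hmi|lra]|].
    split; [exact Hdr|]. specialize (Hpw _ Ecr). lia.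
Qed.

Lemma bis_loop a n d i O B (Hd : 0 < d) g : forall t lo hi r, (hi - lo <= g)%nat ->
  base r n d i O (a i) B -> r 20%nat = INR lo -> r 21%nat = INR hi -> binv a i d B t lo hi ->
  exists N b lo' hi' r', (forall f, run P a (N + f) 64 r = run P a f 82 r') /\
  base r' n d i O (a i) B /\ r' 20%nat = INR lo' /\ r' 21%nat = INR hi' /\ binv a i d B b lo' hi' /\
  ~ (1 < INR (hi' - lo') /\ d * INR lo' < INR (hi' - lo')) /\
  (N <= 14 * (b - t) + 5)%nat /\ (t <= b)%nat /\ (b = t \/ d * 2 ^ (b - 1) < 2).
Proof.
  induction g as [|g IH]; intros t lo hi r Hg Hb H20 H21 Hi.
  - assert (Hc : ~ (1 < INR (hi - lo) /\ d * INR lo < INR (hi - lo))).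
    { replace (hi - lo)%nat with 0%nat by lia. simpl. lra. }
    destruct (bis_exit a n d i O B t lo hi r Hb H20 H21 Hi Hc) as (N & r1 & HN & Hr & Hb1 & E20 & E21).
    exists N, t, lo, hi, r1. do 6 (split; [assumption|]). split; [lia|]. split; [lia|]. left; reflexivity.
  - destruct (Rlt_dec 1 (INR (hi - lo))) as [c1|c1];
    [destruct (Rlt_dec (d * INR lo) (INR (hi - lo))) as [c2|c2]|].
    + destruct (bis_step a n d i O B t lo hi r Hd Hb H20 H21 Hi c1 c2)
        as (Hdt & lo1 & hi1 & r1 & Hr & Hb1 & E20 & E21 & Hi1 & Hlt).
      destruct (IH (S t) lo1 hi1 r1 ltac:(lia) Hb1 E20 E21 Hi1)
        as (N & b & lo' & hi' & r' & Hr' & Hb' & F20 & F21 & Fi & Fc & FN & Ftb & Fb).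
      exists (14 + N)%nat, b, lo', hi', r'. split.
      { intros f. rewrite <- Nat.add_assoc, Hr. apply Hr'. }
      do 5 (split; [assumption|]). split; [lia|]. split; [lia|].
      right. destruct Fb as [Fb|Fb]; [subst b; simpl; rewrite Nat.sub_0_r; exact Hdt| exact Fb].
    + assert (Hc : ~ (1 < INR (hi - lo) /\ d * INR lo < INR (hi - lo))) by tauto.
      destruct (bis_exit a n d i O B t lo hi r Hb H20 H21 Hi Hc) as (N & r1 & HN & Hr & Hb1 & E20 & E21).
      exists N, t, lo, hi, r1. do 6 (split; [assumption|]). split; [lia|]. split; [lia|]. left; reflexivity.
    + assert (Hc : ~ (1 < INR (hi - lo) /\ d * INR lo < INR (hi - lo))) by tauto.
      destruct (bis_exit a n d i O B t lo hi r Hb H20 H21 Hi Hc) as (N & r1 & HN & Hr & Hb1 & E20 & E21).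
      exists N, t, lo, hi, r1. do 6 (split; [assumption|]). split; [lia|]. split; [lia|]. left; reflexivity.
Qed.


Definition base0 (r : regs) n d i O :=
  r 0%nat = INR n /\ r 2%nat = 1 /\ r 3%nat = 2 /\ r 4%nat = 1 + d /\ r 5%nat = d /\
  r 6%nat = INR i /\ r 7%nat = O.

Definition nb0 (k : nat) : bool :=
  negb (Nat.eqb k 0) && negb (Nat.eqb k 2) && negb (Nat.eqb k 3) && negb (Nat.eqb k 4) &&
  negb (Nat.eqb k 5) && negb (Nat.eqb k 6) && negb (Nat.eqb k 7).

Lemma base0_upd r n d i O k v : nb0 k = true -> base0 r n d i O -> base0 (upd r k v) n d i O.
Proof.
  intros Hk (H0 & H2 & H3 & H4 & H5 & H6 & H7). unfold nb0 in Hk.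
  repeat match goal with H: andb _ _ = true |- _ => apply andb_prop in H; destruct H end.
  repeat match goal with H: negb _ = true |- _ => apply Bool.negb_true_iff in H; rewrite Nat.eqb_sym in H end.
  unfold base0, upd.
  repeat match goal with H: Nat.eqb _ _ = false |- _ => rewrite H; clear H end. tauto.
Qed.
Ltac base0_keep := repeat (apply base0_upd; [reflexivity|]).

Lemma base_base0 r n d i O ai B : base r n d i O ai B -> base0 r n d i O.
Proof. unfold base, base0. tauto. Qed.

Lemma seg_fin a r n d i O : base0 r n d i O -> r 9%nat = a 1%nat -> run P a 3 12 r = Some (O + INR i * a 1%nat).
Proof.
  intros (H0 & H2 & H3 & H4 & H5 & H6 & H7) H9. stp. stp. stp. rd. rewrite H7, H6, H9. reflexivity.
Qed.

Lemma seg_pre a r n d i O : base0 r n d i O -> (1 <= i)%nat ->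
  (~ (a 1%nat * (1 + d) < a i) /\ run P a 8 7 r = Some (O + INR i * a 1%nat)) \/
  (a 1%nat * (1 + d) < a i /\ exists r1, (forall f, run P a (5 + f) 7 r = run P a f 15 r1) /\
     base0 r1 n d i O /\ r1 8%nat = a i /\ r1 9%nat = a 1%nat).
Proof.
  intros Hb Hi. pose proof Hb as (H0 & H2 & H3 & H4 & H5 & H6 & H7).
  assert (Hi1 : ~ INR i < 1) by (apply (le_INR 1) in Hi; simpl in Hi; lra).
  assert (E1 : Z.to_nat (Int_part 1) = 1%nat) by (change 1 with (INR 1); apply idx_INR).
  destruct (Rlt_dec (a 1%nat * (1 + d)) (a i)) as [cq|cq].
  - right. split; [exact cq|]. eexists. split.
    { intros f. stp. rewrite H6, H2. br cx1; [contradiction|]. stp. stp. rd.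
      rewrite ?H2, ?H6, ?E1, ?idx_INR. stp. stp. rd. rewrite ?H4. br cx2; [reflexivity|contradiction]. }
    split; [base0_keep; exact Hb|]. rd. rewrite ?H6, ?H2, ?E1, ?idx_INR. split; reflexivity.
  - left. split; [exact cq|].
    change 8%nat with (5 + 3)%nat.
    assert (Hr : forall f, run P a (5 + f) 7 r = run P a f 12 (upd (upd (upd r 9 (a 1%nat)) 8 (a i)) 23 (a 1%nat * (1 + d)))).
    { intros f. stp. rewrite H6, H2. br cx1; [contradiction|]. stp. stp. rd.
      rewrite ?H2, ?H6, ?E1, ?idx_INR. stp. stp. rd. rewrite ?H4. br cx2; [contradiction|reflexivity]. }
    rewrite Hr. apply (seg_fin a _ n d); [base0_keep; exact Hb|]. rd. reflexivity.
Qed.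

Definition Bfacts n (d : R) i B := (1 <= B)%nat /\ (B = 1%nat \/ INR B <= d * INR (n - i)) /\
  (1 <= d * INR (n - i) -> d * INR (n - i) / 2 <= INR B).

Lemma seg_B1 a r n d i O : 0 < d -> base0 r n d i O -> (i <= n)%nat ->
  exists N B r2, (N <= 5)%nat /\ (forall f, run P a (N + f) 15 r = run P a f 20 r2) /\
  Bfacts n d i B /\ base0 r2 n d i O /\ r2 8%nat = r 8%nat /\ r2 9%nat = r 9%nat /\ r2 12%nat = INR B.
Proof.
  intros Hd Hb Hin. pose proof Hb as (H0 & H2 & H3 & H4 & H5 & H6 & H7).
  assert (Em : INR n - INR i = INR (n - i)) by (rewrite minus_INR by lia; reflexivity).
  assert (Hx : 0 <= d * INR (n - i)) by (apply Rmult_le_pos; [lra|apply pos_INR]).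
  destruct (floorR_nonneg _ Hx) as (k & Hk & Hk1 & Hk2).
  destruct (Rlt_dec 1 (INR k)) as [ck|ck].
  - exists 4%nat, k. eexists. split; [lia|]. split.
    { intros f. stp. stp. stp. stp. rd. rewrite ?H0, ?H6, ?Em, ?H5, ?Hk, ?H2. br cx; [reflexivity|contradiction]. }
    split.
    { split; [apply INR_le; simpl; lra|]. split; [right; lra|]. intros. lra. }
    split; [base0_keep; exact Hb|]. rd. rewrite ?H0, ?H6, ?Em, ?H5, ?Hk. auto.
  - exists 5%nat, 1%nat. eexists. split; [lia|]. split.
    { intros f. stp. stp. stp. stp. rd. rewrite ?H0, ?H6, ?Em, ?H5, ?Hk, ?H2. br cx; [contradiction|].
      stp. reflexivity. }
    split.
    { split; [lia|]. split; [left; reflexivity|]. intros. simpl. lra. }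
    split; [base0_keep; exact Hb|]. rd. auto.
Qed.

Lemma seg_B2 a r n d i O B : base0 r n d i O -> r 8%nat = a i -> r 9%nat = a 1%nat -> r 12%nat = INR B ->
  (1 <= i <= n)%nat -> (1 <= B)%nat ->
  ((i <= B)%nat /\ run P a 5 20 r = Some (O + INR i * a 1%nat)) \/
  ((B < i)%nat /\ drop a i d B /\ exists r', (forall f, run P a (10 + f) 20 r = run P a f 7 r') /\
       base0 r' n d (i - B) (O + INR B * a (i - B + 1)%nat)) \/
  ((B < i)%nat /\ Pq a i d B /\ exists r', (forall f, run P a (6 + f) 20 r = run P a f 27 r') /\
       base r' n d i O (a i) B).
Proof.
  intros Hb H8 H9 H12 Hi HB. pose proof Hb as (H0 & H2 & H3 & H4 & H5 & H6 & H7).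
  destruct (Rlt_dec (INR B) (INR i)) as [c1|c1].
  - assert (HBi : (B < i)%nat) by (apply INR_lt; exact c1).
    assert (HBi' : (B <= i)%nat) by lia.
    destruct (Rlt_dec (a (i - B + 1)%nat * (1 + d)) (a i)) as [c2|c2].
    + right; left. split; [exact HBi|]. split; [exact c2|]. eexists. split.
      { intros f. stp. rewrite H12, H6. br cx; [|contradiction]. stp. stp. stp. rd.
        rewrite ?H6, ?H12, ?H2, qidx by exact HBi'. stp. stp. rd. rewrite ?H4, ?H8. br cy; [|contradiction].
        stp. stp. stp. stp. reflexivity. }
      base0_keep. unfold base0, upd. simpl. rewrite H0, H2, H3, H4, H5, H6, H7, H12.
      rewrite minus_INR by lia. repeat split; reflexivity.
    + right; right. split; [exact HBi|]. split; [split; [exact HBi'|lra]|]. eexists. split.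
      { intros f. stp. rewrite H12, H6. br cx; [|contradiction]. stp. stp. stp. rd.
        rewrite ?H6, ?H12, ?H2, qidx by exact HBi'. stp. stp. rd. rewrite ?H4, ?H8. br cy; [contradiction|].
        reflexivity. }
      unfold base. rd. rewrite ?H0, ?H2, ?H3, ?H4, ?H5, ?H6, ?H7, ?H8, ?H12. repeat split; reflexivity.
  - left. split; [apply INR_le; lra|].
    stp. rewrite H12, H6. br cx; [contradiction|]. stp. apply (seg_fin a _ n d); [exact Hb|exact H9].
Qed.

Lemma seg_C a r n d i O ai B : base r n d i O ai B ->
  exists r', (forall f, run P a (3 + f) 27 r = run P a f 30 r') /\ base r' n d i O ai B /\
  r' 13%nat = INR (pv 0) /\ r' 14%nat = INR (pw 0) /\ r' 15%nat = enc 0.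
Proof.
  intros Hb. pose proof Hb as (H0 & H2 & H3 & H4 & H5 & H6 & H7 & H8 & H12).
  eexists. split. { intros f. stp. stp. stp. reflexivity. }
  split; [base_keep; exact Hb|]. rd. rewrite H2. simpl. split; [reflexivity|]. split; [|reflexivity].
  unfold pw. simpl. lra.
Qed.

Lemma seg_D a r n d i O ai B J : base r n d i O ai B -> r 13%nat = INR (pv J) ->
  exists r', (forall f, run P a (2 + f) 42 r = run P a f 44 r') /\ base r' n d i O ai B /\
  r' 16%nat = INR (pv J) /\ ((1 <= J)%nat -> r' 17%nat = INR (pw (J - 1))) /\ r' 15%nat = r 15%nat.
Proof.
  intros Hb H13. pose proof Hb as (H0 & H2 & H3 & H4 & H5 & H6 & H7 & H8 & H12).
  eexists. split. { intros f. stp. stp. reflexivity. }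
  split; [base_keep; exact Hb|]. rd. rewrite H13, H2. split; [lra|]. split; [|reflexivity].
  intros HJ. destruct J; [lia|]. simpl pv. replace (S J - 1)%nat with J by lia. lra.
Qed.

Lemma seg_E a r n d i O ai B m : base r n d i O ai B -> r 16%nat = INR m ->
  exists r', (forall f, run P a (4 + f) 59 r = run P a f 64 r') /\ base r' n d i O ai B /\
  r' 20%nat = INR (B * m) /\ r' 21%nat = INR (if Nat.ltb i (2 * (B * m)) then i else 2 * (B * m)).
Proof.
  intros Hb H16. pose proof Hb as (H0 & H2 & H3 & H4 & H5 & H6 & H7 & H8 & H12).
  assert (E1 : INR B * INR m = INR (B * m)) by (rewrite mult_INR; reflexivity).
  assert (E2 : INR (B * m) * 2 = INR (2 * (B * m))) by (rewrite (mult_INR 2 (B * m)); simpl; lra).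
  destruct (Nat.ltb i (2 * (B * m))) eqn:E.
  - apply Nat.ltb_lt in E. assert (Hc : INR i < INR (2 * (B * m))) by (apply lt_INR; exact E).
    eexists. split.
    { intros f. stp. stp. stp. rd. rewrite ?H12, ?H16, ?E1, ?H3, ?H6, ?E2. br cx; [|contradiction].
      stp. reflexivity. }
    split; [base_keep; exact Hb|]. rd. rewrite ?H12, ?H16, ?E1, ?H6, ?H2. split; [reflexivity|lra].
  - apply Nat.ltb_ge in E. assert (Hc : ~ INR i < INR (2 * (B * m))) by (apply Rle_not_lt, le_INR; exact E).
    eexists. split.
    { intros f. stp. stp. stp. rd. rewrite ?H12, ?H16, ?E1, ?H3, ?H6, ?E2. br cx; [contradiction|].
      stp. reflexivity. }
    split; [base_keep; exact Hb|]. rd. rewrite ?H12, ?H16, ?E1, ?H3, ?E2. split; reflexivity.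
Qed.

Lemma seg_F a r n d i O B lo hi : base r n d i O (a i) B -> r 20%nat = INR lo -> r 21%nat = INR hi ->
  (lo <= hi)%nat -> (hi <= i)%nat ->
  exists r', (forall f, run P a (13 + f) 82 r = run P a f 7 r') /\
  base0 r' n d (i - hi) (O + INR lo * a (i - lo + 1)%nat + INR (hi - lo) * a (i - hi + 1)%nat).
Proof.
  intros Hb H20 H21 Hlh Hhi. pose proof Hb as (H0 & H2 & H3 & H4 & H5 & H6 & H7 & H8 & H12).
  eexists. split.
  { intros f. stp. stp. stp. rd. rewrite ?H6, ?H20, ?H2, qidx by lia.
    stp. stp. stp. stp. stp. rd. rewrite ?H6, ?H21, ?H2, qidx by lia.
    do 5 stp. reflexivity. }
  unfold base0. rd. rewrite ?H0, ?H2, ?H3, ?H4, ?H5, ?H6, ?H7, ?H20, ?H21.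
  rewrite !minus_INR by lia. repeat split; reflexivity.
Qed.


Lemma comp a N1 N2 p1 p2 p3 r1 r2 r3 :
  (forall f, run P a (N1 + f) p1 r1 = run P a f p2 r2) ->
  (forall f, run P a (N2 + f) p2 r2 = run P a f p3 r3) ->
  forall f, run P a ((N1 + N2) + f) p1 r1 = run P a f p3 r3.
Proof. intros H1 H2 f. rewrite <- Nat.add_assoc, H1. apply H2. Qed.

Lemma comp_halt a N1 N2 p1 p2 r1 r2 s :
  (forall f, run P a (N1 + f) p1 r1 = run P a f p2 r2) ->
  run P a N2 p2 r2 = Some s -> run P a (N1 + N2) p1 r1 = Some s.
Proof. intros H1 H2. rewrite H1. exact H2. Qed.

Lemma Jmax_ge n : (1 <= n)%nat -> 2 <= Jmax n.
Proof.
  intros. unfold Jmax. assert (0 <= ln (INR n)) by (apply ln_nonneg; apply (le_INR 1); lia).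
  assert (0 <= ln (1 + ln (INR n))) by (apply ln_nonneg; lra).
  assert (Hl := ln2_pos).
  assert (0 <= ln (1 + ln (INR n)) / ln 2) by (unfold Rdiv; apply Rmult_le_pos; [lra|left; apply Rinv_0_lt_compat; lra]).
  lra.
Qed.

Lemma bmax_ge d : 0 < d <= 1 -> 2 <= bmax d.
Proof.
  intros. unfold bmax. assert (Hl := ln2_pos).
  assert (0 <= ln (/ d)) by (apply ln_nonneg; rewrite <- Rinv_1; apply Rinv_le_contravar; lra).
  assert (0 <= ln (/ d) / ln 2) by (unfold Rdiv; apply Rmult_le_pos; [lra|left; apply Rinv_0_lt_compat; lra]).
  lra.
Qed.

Lemma PB_ge n d : (1 <= n)%nat -> 0 < d <= 1 -> 500 <= PB n d.
Proof. intros. unfold PB. pose proof (Jmax_ge n H). pose proof (bmax_ge d H0). lra. Qed.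

Lemma cost_bound n d (N J b : nat) : (1 <= n)%nat -> 0 < d <= 1 ->
  (N <= 52 + 27 * J + 14 * b)%nat -> ((1 <= J)%nat -> (pw (J - 1) <= n)%nat) ->
  (b = 0%nat \/ d * 2 ^ (b - 1) < 2) -> INR N <= PB n d.
Proof.
  intros Hn Hd HN HJ Hb.
  assert (HJm : INR J <= Jmax n).
  { destruct J as [|J]. - simpl. pose proof (Jmax_ge n Hn). lra.
    - specialize (HJ ltac:(lia)). replace (S J - 1)%nat with J in HJ by lia.
      rewrite S_INR. apply J_bound. exact HJ. }
  assert (Hbm : INR b <= bmax d).
  { destruct Hb as [->|Hb]. - simpl. pose proof (bmax_ge d Hd). lra.
    - destruct b as [|b]. + simpl. pose proof (bmax_ge d Hd). lra.
      + replace (S b - 1)%nat with b in Hb by lia. rewrite S_INR. apply b_bound; lra. }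
  apply le_INR in HN. rewrite !plus_INR, !mult_INR in HN.
  replace (INR 52) with 52 in HN by (simpl; lra). replace (INR 27) with 27 in HN by (simpl; lra).
  replace (INR 14) with 14 in HN by (simpl; lra).
  unfold PB. pose proof (pos_INR J). pose proof (pos_INR b). lra.
Qed.

Lemma round a n d i O r : 0 < d <= 1/3 -> sorted_nonneg a n -> (1 <= i <= n)%nat -> base0 r n d i O ->
 (exists N, INR N <= PB n d /\ run P a N 7 r = Some (O + INR i * a 1%nat) /\ vblock a n d 1 i) \/
 (exists N i' O' r' B, INR N <= PB n d /\ (forall f, run P a (N + f) 7 r = run P a f 7 r') /\
   base0 r' n d i' O' /\ (i' < i)%nat /\ (Inv a n d i O -> Inv a n d i' O') /\ 0 < a i /\
   ((1 <= i')%nat -> a i' * (1 + d) < a i) /\ (n - i + B <= n - i')%nat /\ 1 <= INR B /\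
   (1 <= d * INR (n - i) -> d * INR (n - i) / 2 <= INR B)).
Proof.
  intros Hd Hs Hi Hb.
  assert (Hn : (1 <= n)%nat) by lia.
  assert (HPB := PB_ge n d Hn ltac:(lra)).
  assert (Ha1 : 0 <= a 1%nat) by (apply (sorted_nn a n); [assumption|lia]).
  destruct (seg_pre a r n d i O Hb ltac:(lia)) as [[Hc Hrun] | [Hc (r1 & Hr1 & Hb1 & E8 & E9)]].
  - left. exists 8%nat. split; [simpl; lra|]. split; [exact Hrun|].
    left. lra.
  - assert (Hai : 0 < a i).
    { assert (0 <= a 1%nat * d) by (apply Rmult_le_pos; lra). lra. }
    destruct (seg_B1 a r1 n d i O ltac:(lra) Hb1 ltac:(lia)) as (N1 & B & r2 & HN1 & Hr2 & HBf & Hb2 & E8' & E9' & E12).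
    rewrite E8 in E8'. rewrite E9 in E9'.
    destruct HBf as (HB1 & HB2 & HB3) eqn:HBf'.
    destruct (seg_B2 a r2 n d i O B Hb2 E8' E9' E12 Hi HB1) as
      [[HiB Hrun] | [[HBi [Hdr (r3 & Hr3 & Hb3)]] | [HBi [Hq (r3 & Hr3 & Hb3)]]]].
    +
      left. exists (5 + (N1 + 5))%nat. split.
      { apply (Rle_trans _ (INR 15)); [apply le_INR; lia|simpl; lra]. }
      split; [apply (comp_halt a _ _ _ _ _ _ _ Hr1); apply (comp_halt a _ _ _ _ _ _ _ Hr2); exact Hrun|].
      destruct HB2 as [HB2|HB2].
      * left. replace i with 1%nat by lia. assert (0 <= a 1%nat * d) by (apply Rmult_le_pos; lra). lra.
      * right. replace (i - 1 + 1)%nat with i by lia. apply le_INR in HiB. lra.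
    +
      right. exists (5 + (N1 + 10))%nat, (i - B)%nat, (O + INR B * a (i - B + 1)%nat), r3, B.
      split; [apply (Rle_trans _ (INR 20)); [apply le_INR; lia|simpl; lra]|].
      split; [apply (comp a _ _ _ _ _ _ _ _ Hr1); apply (comp a _ _ _ _ _ _ _ _ Hr2); exact Hr3|].
      split; [exact Hb3|]. split; [lia|].
      split.
      { intros HI. pose proof (block_step a n d (i - B + 1) i O ltac:(lra) Hs ltac:(lia) ltac:(lia) ltac:(lia)) as BS.
        replace (i - (i - B + 1) + 1)%nat with B in BS by lia.
        replace (i - B + 1 - 1)%nat with (i - B)%nat in BS by lia.
        apply BS; [|exact HI].
        destruct HB2 as [->|HB2].
        - left. replace (i - 1 + 1)%nat with i by lia. assert (0 <= a i * d) by (apply Rmult_le_pos; lra). lra.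
        - right. replace (i - (i - B + 1) + 1)%nat with B by lia. exact HB2. }
      split; [exact Hai|]. split.
      { intros Hi'. unfold drop in Hdr. assert (a (i - B)%nat <= a (i - B + 1)%nat) by (apply (sorted_le a n); [assumption|lia..]).
        assert (a (i - B)%nat * (1 + d) <= a (i - B + 1)%nat * (1 + d)) by (apply Rmult_le_compat_r; lra). lra. }
      split; [lia|]. split; [apply (le_INR 1); exact HB1|exact HB3].
    +
      right.
      pose proof Hb3 as (G0 & G2 & G3 & G4 & G5 & G6 & G7 & G8 & G12).
      destruct (seg_C a r3 n d i O (a i) B Hb3) as (r4 & Hr4 & Hb4 & F13 & F14 & F15).
      destruct (gallop_loop a n d i O B HB1 HBi ltac:(lia) (S i) 0 r4 ltac:(lia) Hb4 F13 F14 F15 ltac:(intros; lia))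
        as (Ng & J & r5 & Hr5 & Hb5 & K13 & K15 & KA & KN & KNg & _).
      destruct (seg_D a r5 n d i O (a i) B J Hb5 K13) as (r6 & Hr6 & Hb6 & D16 & D17 & D15).
      rewrite K15 in D15.
      assert (Hqm : Pq a i d (B * pv J)).
      { destruct J as [|J]. - simpl. rewrite Nat.mul_1_r. exact Hq. - simpl pv. apply KA. lia. }
      assert (Hnqm : ~ Pq a i d (B * pv J * pw (J - 1))).
      { rewrite <- Nat.mul_assoc, pv_pw. exact KN. }
      destruct (lift_loop a n d i O B J (pv J) r6 Hb6 D15 D17 D16 (pv_ge1 J) Hqm Hnqm)
        as (Nl & m' & r7 & Hr7 & Hb7 & L16 & Lm & Lq & Lnq & LN).
      destruct (seg_E a r7 n d i O (a i) B m' Hb7 L16) as (r8 & Hr8 & Hb8 & E20 & E21).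
      set (lo0 := (B * m')%nat) in *.
      set (hi0 := if Nat.ltb i (2 * lo0) then i else (2 * lo0)%nat) in *.
      assert (Hlo0i : (lo0 < i)%nat).
      { destruct Lq as [Lq1 Lq2]. destruct (Nat.eq_dec lo0 i) as [E|E]; [|lia].
        exfalso. rewrite E in Lq2. replace (i - i + 1)%nat with 1%nat in Lq2 by lia. lra. }
      assert (Hlo0B : (B <= lo0)%nat) by (unfold lo0; nia).
      assert (Hbinv : binv a i d B 0 lo0 hi0).
      { unfold binv, hi0. destruct (Nat.ltb i (2 * lo0)) eqn:E.
        - apply Nat.ltb_lt in E. split; [lia|]. split; [lia|]. split; [lia|]. split; [exact Lq|].
          split; [unfold drop; replace (i - i + 1)%nat with 1%nat by lia; exact Hc|]. simpl. lia.
        - apply Nat.ltb_ge in E. split; [lia|]. split; [lia|]. split; [lia|]. split; [exact Lq|].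
          split; [|simpl; lia]. unfold drop.
          destruct (Rlt_dec (a (i - 2 * lo0 + 1)%nat * (1 + d)) (a i)) as [h|h]; [exact h|].
          exfalso. apply Lnq. split; [unfold lo0 in E; lia|]. replace (lo0 * 2)%nat with (2 * lo0)%nat by ring. lra. }
      destruct (bis_loop a n d i O B ltac:(lra) (hi0 - lo0) 0 lo0 hi0 r8 ltac:(lia) Hb8 E20 E21 Hbinv)
        as (Nb & b & lo & hi & r9 & Hr9 & Hb9 & B20 & B21 & Bi & Bc & BN & _ & Bb).
      destruct Bi as (Bl & Blh & Bhi & Bq & Bdr & _).
      destruct (seg_F a r9 n d i O B lo hi Hb9 B20 B21 ltac:(lia) Bhi) as (r10 & Hr10 & Hb10).
      exists (5 + (N1 + (6 + (3 + (Ng + (2 + (Nl + (4 + (Nb + 13)))))))))%nat, (i - hi)%nat,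
        (O + INR lo * a (i - lo + 1)%nat + INR (hi - lo) * a (i - hi + 1)%nat), r10, B.
      split.
      { apply (cost_bound n d _ J b Hn ltac:(lra)); [lia| |].
        - intros HJ. destruct (KA (J - 1)%nat ltac:(lia)) as [HK _].
          assert (pw (J - 1) <= B * pw (J - 1))%nat by (apply Nat.le_mul_l; lia). lia.
        - destruct Bb as [Bb|Bb]; [left; exact Bb|right; exact Bb]. }
      split.
      { intros f. rewrite <- !Nat.add_assoc. rewrite Hr1, Hr2, Hr3, Hr4, Hr5, Hr6, Hr7, Hr8, Hr9, Hr10. reflexivity. }
      split; [exact Hb10|]. split; [lia|].
      split.
      { intros HI.
        pose proof (block_step a n d (i - lo + 1) i O ltac:(lra) Hs ltac:(lia) ltac:(lia) ltac:(lia)) as BS1.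
        replace (i - (i - lo + 1) + 1)%nat with lo in BS1 by lia.
        replace (i - lo + 1 - 1)%nat with (i - lo)%nat in BS1 by lia.
        specialize (BS1 ltac:(left; destruct Bq as [_ Bq]; lra) HI).
        pose proof (block_step a n d (i - hi + 1) (i - lo) (O + INR lo * a (i - lo + 1)%nat) ltac:(lra) Hs
          ltac:(lia) ltac:(lia) ltac:(lia)) as BS2.
        replace (i - lo - (i - hi + 1) + 1)%nat with (hi - lo)%nat in BS2 by lia.
        replace (i - hi + 1 - 1)%nat with (i - hi)%nat in BS2 by lia.
        apply BS2; [|exact BS1].
        destruct (Rle_lt_dec (INR (hi - lo)) 1) as [g1|g1].
        - assert (hi - lo <= 1)%nat by (apply INR_le; simpl; lra).
          replace (i - hi + 1)%nat with (i - lo)%nat by lia. left.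
          assert (0 <= a (i - lo)%nat) by (apply (sorted_nn a n); [assumption|lia]).
          assert (0 <= a (i - lo)%nat * d) by (apply Rmult_le_pos; lra). lra.
        - right. assert (INR (hi - lo) <= d * INR lo) by (apply Rnot_lt_le; intros h; apply Bc; split; assumption).
          assert (INR lo <= INR (n - (i - lo))) by (apply le_INR; lia).
          assert (d * INR lo <= d * INR (n - (i - lo))) by (apply Rmult_le_compat_l; lra). replace (i - lo - (i - hi + 1) + 1)%nat with (hi - lo)%nat by lia. lra. }
      split; [exact Hai|]. split.
      { intros Hi'. unfold drop in Bdr. assert (a (i - hi)%nat <= a (i - hi + 1)%nat) by (apply (sorted_le a n); [assumption|lia..]).
        assert (a (i - hi)%nat * (1 + d) <= a (i - hi + 1)%nat * (1 + d)) by (apply Rmult_le_compat_r; lra). lra. }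
      split; [lia|]. split; [apply (le_INR 1); exact HB1|exact HB3].
Qed.


Lemma main_loop a n d : 0 < d <= 1/3 -> sorted_nonneg a n -> (1 <= n)%nat ->
  forall i k O r, (i <= n)%nat -> base0 r n d i O -> Inv a n d i O -> Pot1 d n k i -> Pot2 a n d k i ->
  exists N s, run P a N 7 r = Some s /\ Inv a n d 0 s /\ INR N <= (Kb a n d - INR k + 1) * PB n d.
Proof.
  intros Hd Hs Hn i. induction i as [i IH] using lt_wf_ind. intros k O r Hi Hb HI P1 P2.
  assert (HPB := PB_ge n d Hn ltac:(lra)).
  assert (Hk := pot_k_bound a n d k i ltac:(lra) Hs Hn Hi P1 P2).
  assert (HK0 : PB n d <= (Kb a n d - INR k + 1) * PB n d) by nra.
  destruct i as [|i].
  - exists 2%nat, O. pose proof Hb as (H0 & H2 & H3 & H4 & H5 & H6 & H7). split.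
    { stp. rewrite H6, H2. br cx; [|simpl in cx; lra]. stp. exact (f_equal Some H7). }
    split; [exact HI|]. simpl. lra.
  - destruct (round a n d (S i) O r Hd Hs ltac:(lia) Hb) as
      [(N & HN & Hrun & Hv) | (N & i' & O' & r' & B & HN & Hr & Hb' & Hi' & HInv & Hai & Hdr & HB & HB1 & HB2)].
    + exists N, (O + INR (S i) * a 1%nat). split; [exact Hrun|]. split; [|lra].
      pose proof (block_step a n d 1 (S i) O ltac:(lra) Hs ltac:(lia) ltac:(lia) Hi Hv HI) as BS.
      replace (S i - 1 + 1)%nat with (S i) in BS by lia. exact BS.
    + destruct (Pot_step a n d k (S i) i' B ltac:(lra) Hs ltac:(lia) Hai Hi' Hdr HB HB1 HB2 P1 P2) as [P1' P2'].
      destruct (IH i' Hi' (S k) O' r' ltac:(lia) Hb' (HInv HI) P1' P2') as (N' & s & Hrun & HI' & HN').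
      exists (N + N')%nat, s. split; [rewrite Hr; exact Hrun|]. split; [exact HI'|].
      rewrite plus_INR. rewrite S_INR in HN'. nra.
Qed.

Lemma init_seg a n eps : forall f, run P a (7 + f) 0 (init_regs n eps) =
  run P a f 7 (upd (upd (upd (upd (upd (upd (upd (init_regs n eps) 2 1) 3 (1 + 1)) 23 (1 + 1 + 1))
      5 (eps / (1 + 1 + 1))) 4 (1 + eps / (1 + 1 + 1))) 7 0) 6 (INR n * 1)).
Proof. intros f. do 7 stp. rd. reflexivity. Qed.

Theorem theorem1' :
  exists (P : program) (C : R), 0 < C /\
    forall (n : nat) (eps : R) (a : nat -> R),
      (1 <= n)%nat -> 0 < eps < 1 -> sorted_nonneg a n ->
      exists (s : R) (k : nat),
        run P a k 0 (init_regs n eps) = Some s /\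
        approx eps (sumR a n) s /\
        INR k <= C * time_bound eps n (log_ratio a n).
Proof.
  exists P, 30000. split; [lra|]. intros n eps a Hn He Hs.
  set (d := eps / 3).
  set (r0 := upd (upd (upd (upd (upd (upd (upd (init_regs n eps) 2 1) 3 (1 + 1)) 23 (1 + 1 + 1))
      5 (eps / (1 + 1 + 1))) 4 (1 + eps / (1 + 1 + 1))) 7 0) 6 (INR n * 1)).
  assert (Hb : base0 r0 n d n 0).
  { unfold base0, r0, d. rd. unfold init_regs.
    replace (1 + 1 + 1) with 3 by lra. repeat split; lra. }
  destruct (Pot_init a n d) as [P1 P2].
  destruct (main_loop a n d ltac:(unfold d; lra) Hs Hn n 0 0 r0 ltac:(lia) Hb (Inv_init a n d) P1 P2)
    as (N & s & Hrun & HI & HN).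
  exists s, (7 + N)%nat. split.
  { rewrite init_seg. exact Hrun. }
  split; [apply (Inv_final a n eps s Hn He Hs HI)|].
  pose proof (bound_main n eps a Hn He Hs). simpl INR in HN. fold d in H.
  rewrite plus_INR. replace (INR 7) with 7 by (simpl; lra). lra.
Qed.


Theorem theorem1 :
  exists (P : program) (C : R), 0 < C /\
    forall (n : nat) (eps : R) (a : nat -> R),
      (1 <= n)%nat -> 0 < eps < 1 -> sorted_nonneg a n ->
      exists (s : R) (k : nat),
        run P a k 0 (init_regs n eps) = Some s /\
        approx eps (sumR a n) s /\
        INR k <= C * time_bound eps n (log_ratio a n).
Proof. exact theorem1'. Qed.
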